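(* Let $D=(\alpha,\beta)_{\mathbb Q}$ be a quaternion division algebra and $p\neq2$ a prime with $v_p(\alpha)=v_p(\beta)=0$ and $\alpha$ a square in $\mathbb Q_p$. Identify $G_p$ with $\mathrm{SL}_2(\mathbb Q_p)$ via the isomorphism $x_1+x_2e_2+x_3e_3+x_4e_4\mapsto\begin{pmatrix}x_1+x_2\sqrt\alpha & \beta(x_3+x_4\sqrt\alpha)\\ x_3-x_4\sqrt\alpha & x_1-x_2\sqrt\alpha\end{pmatrix}$. Then the action of the norm-1 group $G$ of $D$ on the tree $\Delta_p$ of $\mathrm{SL}_2(\mathbb Q_p)$ is Weyl transitive.
   Context: $(\alpha,\beta)_{\mathbb Q}$ has basis $1,e_2,e_3,e_4$ with $e_2^2=\alpha$, $e_3^2=\beta$, $e_2e_3=-e_3e_2=e_4$ and norm $N(x)=x_1^2-\alpha x_2^2-\beta x_3^2+\alpha\beta x_4^2$; $D_p=D\otimes\mathbb Q_p$; $G$, $G_p$ are the norm-1 groups of $D$, $D_p$, and $G\subset G_p$. $\Delta_p$ is the Bruhat–Tits tree of $\mathrm{SL}_2(\mathbb Q_p)$ (vertices: homothety classes of $\mathbb Z_p$-lattices in $\mathbb Q_p^2$, adjacent if representatives satisfy $L\supset L'\supset pL$), a building whose chambers are edges, with infinite dihedral Weyl group $W$ and Weyl distance $\delta$. The action is Weyl transitive if for every $w\in W$, $G$ is transitive on pairs of chambers $(C,C')$ with $\delta(C,C')=w$. *)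

(* Defs.v *)
From HB Require Import structures.
From mathcomp Require Import all_boot all_order all_algebra.
Set Implicit Arguments.
Unset Strict Implicit.
Unset Printing Implicit Defensive.
Import Order.TTheory GRing.Theory Num.Theory.
Local Open Scope ring_scope.

Definition vp (p : nat) (q : rat) : int :=
  (logn p `|numq q|%N)%:Z - (logn p `|denq q|%N)%:Z.

(* The quaternion algebra (alpha,beta)_Q on the basis 1,e2,e3,e4 with  *)
(* e2^2 = alpha, e3^2 = beta, e2 e3 = - e3 e2 = e4.                    *)
Definition quat := (rat * rat * rat * rat)%type.

Definition qone : quat := (1, 0, 0, 0).
Definition qzero : quat := (0, 0, 0, 0).

Definition qmul (alpha beta : rat) (x y : quat) : quat :=
  let '(a1, a2, a3, a4) := x in
  let '(b1, b2, b3, b4) := y in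
  (a1 * b1 + alpha * a2 * b2 + beta * a3 * b3 - alpha * beta * a4 * b4,
   a1 * b2 + a2 * b1 - beta * a3 * b4 + beta * a4 * b3,
   a1 * b3 + a3 * b1 + alpha * a2 * b4 - alpha * a4 * b2,
   a1 * b4 + a4 * b1 + a2 * b3 - a3 * b2).

Definition qnorm (alpha beta : rat) (x : quat) : rat :=
  let '(x1, x2, x3, x4) := x in
  x1 ^+ 2 - alpha * x2 ^+ 2 - beta * x3 ^+ 2 + alpha * beta * x4 ^+ 2.

Definition is_division_algebra (alpha beta : rat) : Prop :=
  forall x : quat, x <> qzero ->
    exists y : quat, qmul alpha beta x y = qone /\ qmul alpha beta y x = qone.

Definition normone (alpha beta : rat) (x : quat) : Prop := qnorm alpha beta x = 1.

(* Q_p, characterised up to unique isomorphism: a field K with an       *)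
(* embedding iota of Q and a discrete valuation v (on K^x) extending     *)
(* v_p, such that Q is dense in K and K is complete.                    *)
Section Padic.
Variable p : nat.
Variable K : fieldType.
Variable iota : {rmorphism rat -> K}.
Variable v : K -> int.

Definition close (n : int) (x y : K) : Prop := x = y \/ n <= v (x - y).

Definition is_Qp : Prop :=
  [/\ (forall x y : K, x != 0 -> y != 0 -> v (x * y) = v x + v y),
      (forall x y : K, x != 0 -> y != 0 -> x + y != 0 ->
                       Num.min (v x) (v y) <= v (x + y)),
      (forall q : rat, q != 0 -> v (iota q) = vp p q),
      (forall (x : K) (n : int), exists q : rat, close n x (iota q)) &
      (forall u : nat -> K,
         (forall n : int, exists N : nat, forall m k : nat,
            (N <= m)%N -> (N <= k)%N -> close n (u m) (u k)) ->
         exists l : K, forall n : int, exists N : nat, forall m : nat,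
            (N <= m)%N -> close n (u m) l)].

Definition Zp (x : K) : Prop := x = 0 \/ 0 <= v x.

Definition vec := 'cV[K]_2.
Definition lat := vec -> Prop.

Definition lat_basis (B : 'M[K]_2) (L : lat) : Prop :=
  B \in unitmx /\
  forall y : vec, L y <-> exists c : vec, (forall i, Zp (c i 0)) /\ y = B *m c.

Definition is_lattice (L : lat) : Prop := exists B, lat_basis B L.

Definition lscale (l : K) (L : lat) : lat := fun y => exists z, L z /\ y = l *: z.

Definition homot (L M : lat) : Prop :=
  exists l : K, l != 0 /\ forall y, M y <-> lscale l L y.

Definition lsub (L M : lat) : Prop := forall y, L y -> M y.
Definition lssub (L M : lat) : Prop := lsub L M /\ ~ lsub M L.

(* adjacency in the Bruhat-Tits tree: representatives L ⊋ L' ⊋ pL *)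
Definition adj (L M : lat) : Prop :=
  is_lattice L /\ is_lattice M /\
  exists L' M', homot L L' /\ homot M M' /\
    lssub M' L' /\ lssub (lscale (p%:R) L') M'.

Definition vtype (L : lat) (i : bool) : Prop :=
  exists B, lat_basis B L /\ odd `|v (\det B)|%N = i.

(* chambers = edges = (unordered) pairs of adjacent vertices *)
Definition chamber := (lat * lat)%type.
Definition is_chamber (C : chamber) : Prop := adj C.1 C.2.
Definition ceq (C D : chamber) : Prop :=
  (homot C.1 D.1 /\ homot C.2 D.2) \/ (homot C.1 D.2 /\ homot C.2 D.1).

Definition iadj (i : bool) (C D : chamber) : Prop :=
  is_chamber C /\ is_chamber D /\ ~ ceq C D /\
  exists X Y, (X = C.1 \/ X = C.2) /\ (Y = D.1 \/ Y = D.2) /\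
              homot X Y /\ vtype X i.

Fixpoint gallery (C : chamber) (ws : seq (bool * chamber)) (C' : chamber) : Prop :=
  match ws with
  | [::] => ceq C C'
  | (i, D) :: ws' => iadj i C D /\ gallery D ws' C'
  end.

(* Weyl distance: W = infinite dihedral group <s0,s1>, whose elements are
   represented by their unique reduced words (alternating seq bool);
   delta C C' = w iff w is the type of a minimal gallery from C to C'. *)
Definition weyl_dist (C C' : chamber) (w : seq bool) : Prop :=
  exists ws, gallery C ws C' /\ map fst ws = w /\
    forall ws', gallery C ws' C' -> (size ws <= size ws')%N.

Definition lact (g : 'M[K]_2) (L : lat) : lat := fun y => exists z, L z /\ y = g *m z.
Definition cact (g : 'M[K]_2) (C : chamber) : chamber := (lact g C.1, lact g C.2).

(* The identification D_p -> M_2(Q_p) with a chosen sqrt(alpha) = s *)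
Definition qmx (alpha beta : rat) (s : K) (x : quat) : 'M[K]_2 :=
  let '(x1, x2, x3, x4) := x in
  \matrix_(i < 2, j < 2)
    if (i == 0 :> nat) then
      (if (j == 0 :> nat) then iota x1 + iota x2 * s
       else iota beta * (iota x3 + iota x4 * s))
    else
      (if (j == 0 :> nat) then iota x3 - iota x4 * s
       else iota x1 - iota x2 * s).

Definition weyl_transitive (alpha beta : rat) (s : K) : Prop :=
  forall (w : seq bool) (C1 C1' C2 C2' : chamber),
    is_chamber C1 -> is_chamber C1' -> is_chamber C2 -> is_chamber C2' ->
    weyl_dist C1 C1' w -> weyl_dist C2 C2' w ->
    exists x : quat, normone alpha beta x /\
      ceq (cact (qmx alpha beta s x) C1) C2 /\
      ceq (cact (qmx alpha beta s x) C1') C2'.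

End Padic.

(* Main.v *)
Require Import Defs.
From HB Require Import structures.
From mathcomp Require Import all_boot all_order all_algebra.
From mathcomp Require Import ring lra zify.
From Stdlib Require Import Classical.
Set Implicit Arguments.
Unset Strict Implicit.
Unset Printing Implicit Defensive.
Import Order.TTheory GRing.Theory Num.Theory.
Local Open Scope ring_scope.

Section Mx2.
Variable K : fieldType.

Definition mx2 (a b c d : K) : 'M[K]_2 :=
  \matrix_(i < 2, j < 2)
    if (i == 0 :> nat) then (if (j == 0 :> nat) then a else b)
    else (if (j == 0 :> nat) then c else d).
Definition v2 (a b : K) : 'cV[K]_2 :=
  \matrix_(i < 2, j < 1) if (i == 0 :> nat) then a else b.

Lemma ord2P (i : 'I_2) : i = 0 \/ i = 1.
Proof. case: i => [[|[|i]] Hi]; [left|right|by []]; exact: val_inj. Qed.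
Lemma ord1P (i : 'I_1) : i = 0.
Proof. case: i => [[|i] Hi] //; exact: val_inj. Qed.

Lemma mx2E (A : 'M[K]_2) : A = mx2 (A 0 0) (A 0 1) (A 1 0) (A 1 1).
Proof.
apply/matrixP => i j; rewrite mxE.
by case: (ord2P i) => ->; case: (ord2P j) => ->.
Qed.
Lemma v2E (y : 'cV[K]_2) : y = v2 (y 0 0) (y 1 0).
Proof.
apply/matrixP => i j; rewrite mxE (ord1P j).
by case: (ord2P i) => ->.
Qed.
Lemma mx2_00 a b c d : mx2 a b c d 0 0 = a. Proof. by rewrite mxE. Qed.
Lemma mx2_01 a b c d : mx2 a b c d 0 1 = b. Proof. by rewrite mxE. Qed.
Lemma mx2_10 a b c d : mx2 a b c d 1 0 = c. Proof. by rewrite mxE. Qed.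
Lemma mx2_11 a b c d : mx2 a b c d 1 1 = d. Proof. by rewrite mxE. Qed.
Lemma v2_0 a b : v2 a b 0 0 = a. Proof. by rewrite mxE. Qed.
Lemma v2_1 a b : v2 a b 1 0 = b. Proof. by rewrite mxE. Qed.
Lemma v2_ext (y z : 'cV[K]_2) : y 0 0 = z 0 0 -> y 1 0 = z 1 0 -> y = z.
Proof. by move=> h0 h1; rewrite [y]v2E [z]v2E h0 h1. Qed.
Definition mx2S := (mx2_00, mx2_01, mx2_10, mx2_11, v2_0, v2_1).

Lemma mx2_inj a b c d a' b' c' d' :
  mx2 a b c d = mx2 a' b' c' d' -> [/\ a = a', b = b', c = c' & d = d'].
Proof.
move=> E; split.
- by rewrite -(mx2_00 a b c d) E mx2S.
- by rewrite -(mx2_01 a b c d) E mx2S.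
- by rewrite -(mx2_10 a b c d) E mx2S.
- by rewrite -(mx2_11 a b c d) E mx2S.
Qed.
Lemma v2_inj a b a' b' : v2 a b = v2 a' b' -> a = a' /\ b = b'.
Proof. by move=> E; split; [rewrite -(v2_0 a b) E v2_0 | rewrite -(v2_1 a b) E v2_1]. Qed.

Lemma mx2_mul a b c d a' b' c' d' :
  mx2 a b c d *m mx2 a' b' c' d' =
  mx2 (a * a' + b * c') (a * b' + b * d') (c * a' + d * c') (c * b' + d * d').
Proof.
apply/matrixP => i j; rewrite !mxE !big_ord_recl big_ord0 !mxE /=.
by case: (ord2P i) => ->; case: (ord2P j) => -> /=; rewrite addr0.
Qed.
Lemma mx2_mulv a b c d x y :
  mx2 a b c d *m v2 x y = v2 (a * x + b * y) (c * x + d * y).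
Proof.
apply/matrixP => i j; rewrite !mxE !big_ord_recl big_ord0 !mxE /=.
by case: (ord2P i) => -> /=; rewrite addr0.
Qed.
Lemma mx2_scale l a b c d : l *: mx2 a b c d = mx2 (l * a) (l * b) (l * c) (l * d).
Proof.
apply/matrixP => i j; rewrite !mxE.
by case: (ord2P i) => ->; case: (ord2P j) => ->.
Qed.
Lemma v2_scale l a b : l *: v2 a b = v2 (l * a) (l * b).
Proof. apply/matrixP => i j; rewrite !mxE. by case: (ord2P i) => ->. Qed.
Lemma v2_add a b a' b' : v2 a b + v2 a' b' = v2 (a + a') (b + b').
Proof. apply/matrixP => i j; rewrite !mxE. by case: (ord2P i) => ->. Qed.
Lemma mx2_add a b c d a' b' c' d' :
  mx2 a b c d + mx2 a' b' c' d' = mx2 (a + a') (b + b') (c + c') (d + d').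
Proof.
apply/matrixP => i j; rewrite !mxE.
by case: (ord2P i) => ->; case: (ord2P j) => ->.
Qed.
Lemma mx2_one : (1 : 'M[K]_2) = mx2 1 0 0 1.
Proof.
apply/matrixP => i j; rewrite !mxE.
by case: (ord2P i) => ->; case: (ord2P j) => ->.
Qed.
Lemma mx2_det a b c d : \det (mx2 a b c d) = a * d - b * c.
Proof.
rewrite (expand_det_row _ 0) !big_ord_recl big_ord0 /cofactor !det_mx11 !mxE /=.
rewrite /bump /= add0n expr0 expr1. ring.
Qed.
Lemma mx2_unit a b c d : (mx2 a b c d \in unitmx) = (a * d - b * c != 0).
Proof. by rewrite unitmxE mx2_det unitfE. Qed.

End Mx2.

Section Main.
Variables (p : nat) (K : fieldType) (iota : {rmorphism rat -> K}) (v : K -> int).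
Hypothesis Hq : is_Qp p iota v.
Hypothesis Hp : prime p.

Lemma vM x y : x != 0 -> y != 0 -> v (x * y) = v x + v y.
Proof. by have:= Hq; rewrite /is_Qp => -[]; auto. Qed.
Lemma vD n x y : x != 0 -> y != 0 -> x + y != 0 -> n <= v x -> n <= v y -> n <= v (x + y).
Proof.
have:= Hq; rewrite /is_Qp => -[_ H _ _ _] nx ny nxy hx hy.
apply: le_trans (H _ _ nx ny nxy). by rewrite /Num.min; case: ifP.
Qed.
Lemma viota q : q != 0 -> v (iota q) = vp p q.
Proof. by have:= Hq; rewrite /is_Qp => -[]; auto. Qed.
Lemma v1 : v 1 = 0.
Proof.
have h : v 1 = v 1 + v 1 by rewrite -vM ?oner_neq0 // mulr1.
lia.
Qed.
Lemma vN1 : v (-1) = 0.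
Proof.
have n1 : (-1 : K) != 0 by rewrite oppr_eq0 oner_neq0.
have h : v 1 = v (-1) + v (-1) by rewrite -vM // mulrNN mulr1.
rewrite v1 in h. lia.
Qed.
Lemma vN x : v (- x) = v x.
Proof.
have [->|x0] := eqVneq x 0; first by rewrite oppr0.
by rewrite -mulN1r vM ?oppr_eq0 ?oner_neq0 // vN1 add0r.
Qed.
Lemma vV x : x != 0 -> v x^-1 = - v x.
Proof.
move=> x0; have h : v 1 = v x + v x^-1 by rewrite -vM ?invr_neq0 // mulfV.
rewrite v1 in h. lia.
Qed.

Definition P : K := p%:R.
Lemma p_gt0 : (0 < p)%N. Proof. exact: prime_gt0. Qed.
Lemma P_iota : P = iota p%:R. Proof. by rewrite rmorph_nat. Qed.
Lemma P_neq0 : P != 0.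
Proof. by rewrite P_iota fmorph_eq0 pnatr_eq0 -lt0n p_gt0. Qed.
Lemma vpn (n : nat) : (0 < n)%N -> vp p n%:R = (logn p n)%:Z.
Proof.
move=> n0. rewrite /vp -[n%:R]/((n%:Z)%:~R) numq_int denq_int /= logn1.
by rewrite subr0.
Qed.
Lemma vP : v P = 1.
Proof.
rewrite P_iota viota; last by rewrite pnatr_eq0 -lt0n p_gt0.
by rewrite vpn ?p_gt0 // logn_prime // eqxx.
Qed.
Lemma two_neq0 : (2 : K) != 0.
Proof. by rewrite -(rmorph_nat iota) fmorph_eq0 pnatr_eq0. Qed.
Lemma v_two : p != 2%N -> v 2 = 0.
Proof.
move=> p2. rewrite -(rmorph_nat iota) viota ?pnatr_eq0 // vpn // logn_prime //.
by rewrite (negbTE p2).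
Qed.

Definition small (n : int) (x : K) := x = 0 \/ n <= v x.
Lemma small0 n : small n 0. Proof. by left. Qed.
Lemma small_le m n x : m <= n -> small n x -> small m x.
Proof. by move=> mn [->|h]; [left|right; apply: le_trans h]. Qed.
Lemma small_add n x y : small n x -> small n y -> small n (x + y).
Proof.
have [->|x0] := eqVneq x 0; first by rewrite add0r.
have [->|y0] := eqVneq y 0; first by rewrite addr0.
move=> [/eqP|hx]; first by rewrite (negbTE x0).
move=> [/eqP|hy]; first by rewrite (negbTE y0).
have [->|nxy] := eqVneq (x + y) 0; first by left.
by right; apply: vD.
Qed.
Lemma small_opp n x : small n x -> small n (- x).
Proof. by move=> [->|h]; [left; rewrite oppr0|right; rewrite vN]. Qed.
Lemma small_sub n x y : small n x -> small n y -> small n (x - y).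
Proof. by move=> hx hy; apply: small_add => //; apply: small_opp. Qed.
Lemma small_mul a b x y : small a x -> small b y -> small (a + b) (x * y).
Proof.
move=> [->|hx]; first by rewrite mul0r; left.
move=> [->|hy]; first by rewrite mulr0; left.
have [x0|x0] := eqVneq x 0; first by rewrite x0 mul0r; left.
have [y0|y0] := eqVneq y 0; first by rewrite y0 mulr0; left.
by right; rewrite vM // lerD.
Qed.
Lemma small_v x : x != 0 -> small (v x) x.
Proof. by move=> _; right. Qed.
Lemma small_any x m : exists n, n <= m /\ small n x.
Proof.
have [->|x0] := eqVneq x 0; first by exists m; split => //; left.
exists (Num.min m (v x)); split; first by rewrite ge_min lexx.
by right; rewrite ge_min lexx orbT.
Qed.
Lemma small_unit x : x != 0 -> v x = 0 -> forall y, small 0 (y / x) <-> small 0 y.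
Proof.
move=> x0 vx y; have [->|y0] := eqVneq y 0; first by rewrite mul0r; split => _; left.
have e : v (y / x) = v y by rewrite vM ?invr_neq0 // vV // vx oppr0 addr0.
have yx0 : y / x != 0 by rewrite mulf_neq0 ?invr_neq0.
rewrite /small e; split => -[/eqP h|h]; try by right.
- by rewrite h in yx0.
- by rewrite h in y0.
Qed.
Lemma small_vP x : small 1 x <-> exists y, small 0 y /\ x = P * y.
Proof.
split.
  move=> h; exists (x / P); split; last by rewrite mulrC divfK ?P_neq0.
  case: h => [->|h]; first by rewrite mul0r; left.
  have [->|x0] := eqVneq x 0; first by rewrite mul0r; left.
  by right; rewrite vM ?invr_neq0 ?P_neq0 // vV ?P_neq0 // vP subr_ge0.
move=> [y [hy ->]]. have := small_mul (small_v P_neq0) hy. by rewrite vP addr0.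
Qed.
Lemma unit_of x : small 0 x -> ~ small 1 x -> x != 0 /\ v x = 0.
Proof.
move=> [->|h] h1; first by exfalso; apply: h1; left.
have x0 : x != 0 by apply/eqP => x0; apply: h1; left.
split => //; have h2 : ~ (1 <= v x) by move=> H; apply: h1; right.
lia.
Qed.

Implicit Types (L M N : lat K) (g B W : 'M[K]_2) (C D E : chamber K).


Definition latm (B : 'M[K]_2) : lat K :=
  fun y => exists c : 'cV[K]_2, (forall i, Defs.Zp v (c i 0)) /\ y = B *m c.
Definition leqv (L M : lat K) := forall y, L y <-> M y.

Lemma intv2 a b : (forall i, Defs.Zp v (v2 a b i 0)) <-> small 0 a /\ small 0 b.
Proof.
split; first by move=> h; split; [have := h 0|have := h 1]; rewrite mx2S.
by move=> [ha hb] i; case: (ord2P i) => ->; rewrite mx2S.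
Qed.
Lemma latmP B y : latm B y <-> exists a b, small 0 a /\ small 0 b /\ y = B *m v2 a b.
Proof.
split.
  move=> [c [hc ->]]; exists (c 0 0), (c 1 0); rewrite -v2E; split; [|split] => //.
  - exact: hc.
  - exact: hc.
by move=> [a [b [ha [hb ->]]]]; exists (v2 a b); split => //; apply/intv2.
Qed.

Lemma leqv_refl L : leqv L L. Proof. by []. Qed.
Lemma leqv_sym L M : leqv L M -> leqv M L. Proof. by move=> h y; split => /h. Qed.
Lemma leqv_trans L M N : leqv L M -> leqv M N -> leqv L N.
Proof. by move=> h1 h2 y; rewrite h1 h2. Qed.

Lemma lact_leqv g L M : leqv L M -> leqv (lact g L) (lact g M).
Proof. by move=> h y; split => -[z [/h hz ->]]; exists z. Qed.
Lemma lscale_leqv l L M : leqv L M -> leqv (lscale l L) (lscale l M).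
Proof. by move=> h y; split => -[z [/h hz ->]]; exists z. Qed.
Lemma lact_latm g B : leqv (lact g (latm B)) (latm (g *m B)).
Proof.
move=> y; split.
  by move=> [z [[c [hc ->]] ->]]; exists c; rewrite mulmxA.
by move=> [c [hc ->]]; exists (B *m c); split; [exists c|rewrite mulmxA].
Qed.
Lemma lscale_latm l B : leqv (lscale l (latm B)) (latm (l *: B)).
Proof.
move=> y; split.
  by move=> [z [[c [hc ->]] ->]]; exists c; rewrite scalemxAl.
by move=> [c [hc ->]]; exists (B *m c); split; [exists c|rewrite scalemxAl].
Qed.
Lemma lact_comp g h L : leqv (lact g (lact h L)) (lact (g *m h) L).
Proof.
move=> y; split.
  by move=> [z [[w [hw ->]] ->]]; exists w; rewrite mulmxA.
by move=> [w [hw ->]]; exists (h *m w); split; [exists w|rewrite mulmxA].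
Qed.
Lemma lact_scale g l L : leqv (lact g (lscale l L)) (lscale l (lact g L)).
Proof.
move=> y; split.
  by move=> [z [[w [hw ->]] ->]]; exists (g *m w); split; [exists w|rewrite scalemxAr].
by move=> [z [[w [hw ->]] ->]]; exists (l *: w); split; [exists w|rewrite scalemxAr].
Qed.
Lemma lscale_comp a b L : leqv (lscale a (lscale b L)) (lscale (a * b) L).
Proof.
move=> y; split.
  by move=> [z [[w [hw ->]] ->]]; exists w; rewrite scalerA.
by move=> [w [hw ->]]; exists (b *: w); split; [exists w|rewrite scalerA].
Qed.
Lemma lscale1 L : leqv (lscale 1 L) L.
Proof.
move=> y; split; first by move=> [z [hz ->]]; rewrite scale1r.
by move=> hy; exists y; rewrite scale1r.
Qed.

Lemma homot_leqv L M : leqv L M -> homot L M.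
Proof.
move=> h; exists 1; split; first exact: oner_neq0.
by move=> y; rewrite lscale1 h.
Qed.
Lemma homot_refl L : homot L L. Proof. exact: homot_leqv. Qed.
Lemma homot_sym L M : homot L M -> homot M L.
Proof.
move=> [l [l0 h]]; exists l^-1; split; first by rewrite invr_neq0.
move=> y; split.
  move=> hy; exists (l *: y); split; first by apply/h; exists y.
  by rewrite scalerA mulVf // scale1r.
move=> [z [/h [w [hw ->]] ->]]. by rewrite scalerA mulVf // scale1r.
Qed.
Lemma homot_trans L M N : homot L M -> homot M N -> homot L N.
Proof.
move=> [a [a0 ha]] [b [b0 hb]]; exists (b * a); split; first by rewrite mulf_neq0.
move=> y; rewrite hb -lscale_comp; apply: lscale_leqv. by move=> z; rewrite ha.
Qed.
Lemma homot_scale l L : l != 0 -> homot L (lscale l L).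
Proof. by move=> l0; exists l. Qed.
Lemma homot_lact g L M : homot L M -> homot (lact g L) (lact g M).
Proof.
move=> [l [l0 h]]; exists l; split => // y.
rewrite -lact_scale; apply: lact_leqv. exact: h.
Qed.
Lemma homot_leqv_l L L' M : leqv L L' -> homot L M -> homot L' M.
Proof. by move=> h1 h2; apply: homot_trans h2; apply: homot_leqv; apply: leqv_sym. Qed.
Lemma homot_leqv_r L M M' : leqv M M' -> homot L M -> homot L M'.
Proof. by move=> h1 h2; apply: homot_trans h2 _; apply: homot_leqv. Qed.
Lemma homot_latm_scale l B : l != 0 -> homot (latm B) (latm (l *: B)).
Proof. move=> l0; apply: homot_leqv_r (homot_scale _ l0); exact: lscale_latm. Qed.

Definition intm (W : 'M[K]_2) := forall i j, small 0 (W i j).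
Lemma intm_mx2 a b c d : intm (mx2 a b c d) <-> [/\ small 0 a, small 0 b, small 0 c & small 0 d].
Proof.
split; first by move=> h; split; [have := h 0 0|have := h 0 1|have := h 1 0|have := h 1 1]; rewrite mx2S.
by move=> [ha hb hc hd] i j; case: (ord2P i) => ->; case: (ord2P j) => ->; rewrite mx2S.
Qed.
Lemma small_mul0 x y : small 0 x -> small 0 y -> small 0 (x * y).
Proof. by move=> hx hy; have := small_mul hx hy; rewrite addr0. Qed.
Lemma small_det W : intm W -> small 0 (\det W).
Proof.
rewrite [W]mx2E mx2_det => /intm_mx2 [ha hb hc hd].
by apply: small_sub; apply: small_mul0.
Qed.
Lemma intm_mulv W (c : 'cV[K]_2) : intm W -> (forall i, Defs.Zp v (c i 0)) -> (forall i, Defs.Zp v ((W *m c) i 0)).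
Proof.
rewrite [W]mx2E [c]v2E mx2_mulv => /intm_mx2 [ha hb hc hd] /intv2 [h1 h2].
by apply/intv2; split; apply: small_add; apply: small_mul0.
Qed.
Lemma latm_sub B W : intm W -> forall y, latm (B *m W) y -> latm B y.
Proof.
move=> hW y [c [hc ->]]; exists (W *m c); split; last by rewrite mulmxA.
exact: intm_mulv.
Qed.
Definition unimod (W : 'M[K]_2) := intm W /\ \det W != 0 /\ v (\det W) = 0.
Lemma unimod_inv W : unimod W -> exists W', unimod W' /\ W *m W' = 1.
Proof.
rewrite [W]mx2E; set a := W 0 0; set b := W 0 1; set c := W 1 0; set d := W 1 1.
move=> [/intm_mx2 [ha hb hc hd] [d0 vd]].
rewrite mx2_det in d0 vd.
exists (mx2 (d / (a * d - b * c)) (- b / (a * d - b * c)) (- c / (a * d - b * c)) (a / (a * d - b * c))).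
split; last by rewrite mx2_mul mx2_one; congr mx2; field.
split; first apply/intm_mx2; first split; rewrite ?small_unit //; try exact: small_opp.
rewrite mx2_det.
have -> : d / (a * d - b * c) * (a / (a * d - b * c)) - - b / (a * d - b * c) * (- c / (a * d - b * c))
  = (a * d - b * c)^-1 by field.
by rewrite invr_neq0 // vV // vd oppr0.
Qed.
Lemma latm_unimod B W : unimod W -> leqv (latm (B *m W)) (latm B).
Proof.
move=> hW y; split; first by apply: latm_sub; case: hW.
have [W' [hW' e]] := unimod_inv hW.
move=> hy; apply: (@latm_sub _ W'); first by case: hW'.
by rewrite -mulmxA e mulmx1.
Qed.
Lemma unimod_mx2 a b c d : small 0 a -> small 0 b -> small 0 c -> small 0 d ->
  a * d - b * c != 0 -> v (a * d - b * c) = 0 -> unimod (mx2 a b c d).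
Proof. by move=> *; split; [apply/intm_mx2|rewrite mx2_det]. Qed.


Lemma latm_add B y z : latm B y -> latm B z -> latm B (y + z).
Proof.
move=> [c [hc ->]] [d [hd ->]]; exists (c + d); split; last by rewrite mulmxDr.
move=> i; rewrite mxE; exact: (small_add (hc i) (hd i)).
Qed.
Lemma latm_scale B a y : small 0 a -> latm B y -> latm B (a *: y).
Proof.
move=> ha [c [hc ->]]; exists (a *: c); split; last by rewrite scalemxAr.
move=> i; rewrite mxE; exact: (small_mul0 ha (hc i)).
Qed.
Lemma latm1P y : latm 1 y <-> small 0 (y 0 0) /\ small 0 (y 1 0).
Proof.
rewrite latmP; split.
  by move=> [a [b [ha [hb ->]]]]; rewrite mul1mx !mx2S.
move=> [h0 h1]; exists (y 0 0), (y 1 0); do 2 split => //; by rewrite mul1mx -v2E.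
Qed.
Lemma lscaleP1 y : lscale P (latm 1) y <-> small 1 (y 0 0) /\ small 1 (y 1 0).
Proof.
split.
  move=> [z [/latm1P [h0 h1] ->]]; rewrite !mxE; split; apply/small_vP; eauto.
move=> [/small_vP [a [ha ea]] /small_vP [b [hb eb]]].
exists (v2 a b); split; first by apply/latm1P; rewrite !mx2S.
by rewrite [y]v2E ea eb v2_scale.
Qed.

Definition lsub' L M := forall y, L y -> M y.
Lemma lact_sub g L M : lsub' L M -> lsub' (lact g L) (lact g M).
Proof. by move=> h y [z [hz ->]]; exists z; split => //; apply: h. Qed.
Lemma lact_inv g L : g \in unitmx -> leqv (lact (invmx g) (lact g L)) L.
Proof.
move=> gu; apply: leqv_trans (lact_comp _ _ _) _.
rewrite mulVmx //. move=> y; split; first by move=> [z [hz ->]]; rewrite mul1mx.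
by move=> hy; exists y; rewrite mul1mx.
Qed.
Lemma lact_inv' g L : g \in unitmx -> leqv (lact g (lact (invmx g) L)) L.
Proof.
move=> gu; have gu' : invmx g \in unitmx by rewrite unitmx_inv.
by have := lact_inv L gu'; rewrite invmxK.
Qed.
Lemma lsub_leqv L L' M M' : leqv L L' -> leqv M M' -> lsub' L M -> lsub' L' M'.
Proof. by move=> h1 h2 h y /h1 /h /h2. Qed.
Lemma lact_sub_inv g L M : g \in unitmx -> lsub' (lact g L) (lact g M) -> lsub' L M.
Proof.
move=> gu h; apply: (lsub_leqv (lact_inv L gu) (lact_inv M gu)).
exact: lact_sub.
Qed.

Lemma lat_unit_basis L : is_lattice v L -> exists B, B \in unitmx /\ leqv L (latm B).
Proof. by move=> [B [Bu h]]; exists B. Qed.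
Lemma is_lattice_latm B : B \in unitmx -> is_lattice v (latm B).
Proof. by move=> Bu; exists B; split. Qed.
Lemma is_lattice_leqv L M : leqv L M -> is_lattice v L -> is_lattice v M.
Proof. move=> h [B [Bu hB]]; exists B; split => // y; rewrite -h; exact: hB. Qed.
Lemma is_lattice_homot L M : homot L M -> is_lattice v L -> is_lattice v M.
Proof.
move=> [l [l0 h]] [B [Bu hB]]; exists (l *: B); split.
  by rewrite unitmxZ ?unitfE.
move=> y; rewrite h; exact: (leqv_trans (lscale_leqv l hB) (lscale_latm l B) y).
Qed.

Lemma intmE W : intm W <-> (forall i, Defs.Zp v ((W *m v2 1 0) i 0)) /\ (forall i, Defs.Zp v ((W *m v2 0 1) i 0)).
Proof.
rewrite [W]mx2E !mx2_mulv !intv2 intm_mx2 !mulr1 !mulr0 !addr0 !add0r.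
by split; [case|move=> [[? ?] [? ?]]].
Qed.
Lemma latm_coord B y : B \in unitmx -> latm B y -> forall i, Defs.Zp v ((invmx B *m y) i 0).
Proof. by move=> Bu [c [hc ->]]; rewrite mulKmx. Qed.
Lemma latm_change B B' : B \in unitmx -> (forall y, latm B' y -> latm B y) -> intm (invmx B *m B').
Proof.
have s1 : small 0 (1 : K) by right; rewrite v1.
have s0 : small 0 (0 : K) by left.
move=> Bu h; apply/intmE; split; rewrite -mulmxA; apply: latm_coord => //; apply: h.
  by exists (v2 1 0); split => //; apply/intv2.
by exists (v2 0 1); split => //; apply/intv2.
Qed.
Lemma latm_eq_v B B' : B \in unitmx -> B' \in unitmx -> leqv (latm B) (latm B') -> v (\det B) = v (\det B').
Proof.
move=> Bu B'u h.
have hU := latm_change Bu (fun y => proj2 (h y)).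
have hU' := latm_change B'u (fun y => proj1 (h y)).
set U := invmx B *m B' in hU; set U' := invmx B' *m B in hU'.
have e : U *m U' = 1 by rewrite /U /U' mulmxA -(mulmxA _ B') mulmxV // mulmx1 mulVmx.
have eB : B' = B *m U by rewrite /U mulKVmx.
have dU : \det U * \det U' = 1 by rewrite -det_mulmx e det1.
have U0 : \det U != 0 by apply/eqP => h0; move: dU; rewrite h0 mul0r => /eqP; rewrite eq_sym oner_eq0.
have U'0 : \det U' != 0 by apply/eqP => h0; move: dU; rewrite h0 mulr0 => /eqP; rewrite eq_sym oner_eq0.
have h1 : v (\det U) + v (\det U') = 0 by rewrite -vM // dU v1.
have := small_det hU; case=> [/eqP|h2]; first by rewrite (negbTE U0).
have := small_det hU'; case=> [/eqP|h3]; first by rewrite (negbTE U'0).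
have B0 : \det B != 0 by rewrite -unitfE -unitmxE.
have h4 : v (\det U) <= 0 by rewrite -h1 lerDl.
have h5 : v (\det U) = 0 by apply/eqP; rewrite eq_le h4 h2.
by rewrite eB det_mulmx vM // h5 addr0.
Qed.

Lemma vtype_basis L B i : B \in unitmx -> leqv L (latm B) -> vtype v L i -> i = odd `|v (\det B)|%N.
Proof.
move=> Bu hB [B' [[B'u hB'] <-]].
rewrite (@latm_eq_v B' B) // => y. split; last by move/hB/hB'.
by move/hB'/hB.
Qed.
Lemma vtype_latm B : B \in unitmx -> vtype v (latm B) (odd `|v (\det B)|%N).
Proof. by move=> Bu; exists B; split. Qed.
Lemma vtype_leqv L M i : leqv L M -> vtype v L i -> vtype v M i.
Proof. move=> h [B [[Bu hB] e]]; exists B; split => //; split => // y; rewrite -h; exact: hB. Qed.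
Lemma vtype_homot L M i : homot L M -> vtype v L i -> vtype v M i.
Proof.
move=> [l [l0 h]] [B [[Bu hB] <-]].
have lBu : l *: B \in unitmx by rewrite unitmxZ ?unitfE.
apply: (@vtype_leqv (latm (l *: B))).
  apply: leqv_sym; exact: (leqv_trans h (leqv_trans (lscale_leqv l hB) (lscale_latm l B))).
have B0 : \det B != 0 by rewrite -unitfE -unitmxE.
have e : v (\det (l *: B)) = v l + v l + v (\det B).
  by rewrite detZ expr2 vM ?mulf_neq0 // vM.
have -> : (odd `|v (\det B)|%N) = odd `|v (\det (l *: B))|%N by rewrite e; lia.
exact: vtype_latm.
Qed.
Lemma vtype_uniq L i j : vtype v L i -> vtype v L j -> i = j.
Proof.
move=> hi [B [[Bu hB] <-]]. exact: (vtype_basis Bu hB hi).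
Qed.

Lemma s01 : small 0 (1 : K). Proof. by right; rewrite v1. Qed.
Lemma s0N1 : small 0 (-1 : K). Proof. by right; rewrite vN1. Qed.
Lemma s0P : small 0 P. Proof. by right; rewrite vP. Qed.
Lemma s1P : small 1 P. Proof. by right; rewrite vP. Qed.
Lemma s0V x : x != 0 -> v x = 0 -> small 0 x^-1.
Proof. by move=> x0 vx; right; rewrite vV // vx oppr0. Qed.
Lemma s10 x : small 1 x -> small 0 x.
Proof. exact: small_le. Qed.

Lemma CL N :
  (forall y z, N y -> N z -> N (y + z)) ->
  (forall a y, small 0 a -> N y -> N (a *: y)) ->
  lsub' N (latm 1) -> ~ lsub' (latm 1) N ->
  lsub' (lscale P (latm 1)) N -> ~ lsub' N (lscale P (latm 1)) ->
  (exists a, small 0 a /\ leqv N (latm (mx2 1 0 a P))) \/ leqv N (latm (mx2 P 0 0 1)).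
Proof.
move=> Nadd Nsc Nsub1 Nnot1 NP NnotP.
have NeP : N (v2 0 P) by apply: NP; apply/lscaleP1; rewrite !mx2S; split; [left|exact: s1P].
have NeP' : N (v2 P 0) by apply: NP; apply/lscaleP1; rewrite !mx2S; split; [exact: s1P|left].
have Nall : N (v2 1 0) -> N (v2 0 1) -> False.
  move=> N1 N2; apply: Nnot1 => y /latm1P [h0 h1].
  have -> : y = y 0 0 *: v2 1 0 + y 1 0 *: v2 0 1.
    by apply: v2_ext; rewrite !mxE /=; ring.
  by apply: Nadd; apply: Nsc.
case: (classic (exists y, N y /\ ~ small 1 (y 0 0))) => [[y [Ny hy]]|hB].
- have /latm1P [hy0 hy1] := Nsub1 _ Ny.
  have [u0 vu] := unit_of hy0 hy.
  set a := y 1 0 / y 0 0.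
  have ha : small 0 a by apply/small_unit.
  have Nw : N (v2 1 a).
    have -> : v2 1 a = (y 0 0)^-1 *: y by apply: v2_ext; rewrite !mxE /= /a; field.
    by apply: Nsc => //; apply: s0V.
  left; exists a; split => // z; split.
  + move=> Nz; have /latm1P [hz0 hz1] := Nsub1 _ Nz.
    set t := z 1 0 - z 0 0 * a.
    have Nt : N (v2 0 t).
      have -> : v2 0 t = z + (- z 0 0) *: v2 1 a.
        by apply: v2_ext; rewrite !mxE /= /t; ring.
      by apply: Nadd => //; apply: Nsc => //; apply: small_opp.
    have ht0 : small 0 t by apply: small_sub => //; apply: small_mul0.
    have : small 1 t.
      apply: NNPP => nt; have [t0 vt] := unit_of ht0 nt.
      have N2 : N (v2 0 1).
        have -> : v2 0 1 = t^-1 *: v2 0 t by rewrite v2_scale; congr v2; field.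
        by apply: Nsc => //; apply: s0V.
      apply: (Nall _ N2).
      have -> : v2 1 0 = v2 1 a + (- a) *: v2 0 1 by rewrite v2_scale v2_add; congr v2; ring.
      by apply: Nadd => //; apply: Nsc => //; apply: small_opp.
    move=> /small_vP [t' [ht' et']].
    apply/latmP; exists (z 0 0), t'; split => //; split => //.
    rewrite mx2_mulv [LHS]v2E; congr v2; first ring.
    by rewrite -et' /t; ring.
  + move=> /latmP [c0 [c1 [h0 [h1 ->]]]].
    have -> : mx2 1 0 a P *m v2 c0 c1 = c0 *: v2 1 a + c1 *: v2 0 P.
      by rewrite mx2_mulv !v2_scale v2_add; congr v2; ring.
    by apply: Nadd; apply: Nsc.
- have hB' : forall y, N y -> small 1 (y 0 0).
    by move=> y Ny; apply: NNPP => h; apply: hB; exists y.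
  have [y [Ny nPy]] : exists y, N y /\ ~ lscale P (latm 1) y.
    apply: NNPP => H; apply: NnotP => y Ny; apply: NNPP => H2; apply: H; exists y; auto.
  have hy0 := hB' _ Ny.
  have /latm1P [_ hy1] := Nsub1 _ Ny.
  have ny1 : ~ small 1 (y 1 0) by move=> h; apply: nPy; apply/lscaleP1.
  have [u0 vu] := unit_of hy1 ny1.
  have N2 : N (v2 0 1).
    have Ny' : N (v2 0 (y 1 0)).
      have -> : v2 0 (y 1 0) = y + (-1) *: v2 (y 0 0) 0.
        by apply: v2_ext; rewrite !mxE /=; ring.
      apply: Nadd => //; apply: Nsc; first exact: s0N1.
      by apply: NP; apply/lscaleP1; rewrite !mx2S; split => //; left.
    have -> : v2 0 1 = (y 1 0)^-1 *: v2 0 (y 1 0) by rewrite v2_scale; congr v2; field.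
    by apply: Nsc => //; apply: s0V.
  right => z; split.
  + move=> Nz; have /latm1P [hz0 hz1] := Nsub1 _ Nz.
    have /small_vP [t [ht et]] := hB' _ Nz.
    apply/latmP; exists t, (z 1 0); split => //; split => //.
    by rewrite mx2_mulv [LHS]v2E et; congr v2; ring.
  + move=> /latmP [c0 [c1 [h0 [h1 ->]]]].
    have -> : mx2 P 0 0 1 *m v2 c0 c1 = c0 *: v2 P 0 + c1 *: v2 0 1.
      by rewrite mx2_mulv !v2_scale v2_add; congr v2; ring.
    by apply: Nadd; apply: Nsc.
Qed.

Lemma leqv_closed L M : leqv L M ->
  ((forall y z, M y -> M z -> M (y + z)) -> (forall y z, L y -> L z -> L (y + z))) /\
  ((forall a y, small 0 a -> M y -> M (a *: y)) -> (forall a y, small 0 a -> L y -> L (a *: y))).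
Proof.
move=> h; split; first by move=> H y z /h hy /h hz; apply/h; apply: H.
by move=> H a y ha /h hy; apply/h; apply: H.
Qed.

Lemma ADJ L M B : adj p v L M -> B \in unitmx -> leqv L (latm B) ->
  (exists a, small 0 a /\ homot M (latm (B *m mx2 1 0 a P))) \/
  homot M (latm (B *m mx2 P 0 0 1)).
Proof.
move=> [_ [latM [L' [M' [[l [l0 hl]] [hMM' [[sub1 nsub1] [sub2 nsub2]]]]]]]] Bu hB.
set B1 := l *: B.
have B1u : B1 \in unitmx by rewrite unitmxZ ?unitfE.
have iB1u : invmx B1 \in unitmx by rewrite unitmx_inv.
have hL' : leqv L' (latm B1) := leqv_trans hl (leqv_trans (lscale_leqv l hB) (lscale_latm l B)).
have [BM [BMu hBM]] := lat_unit_basis (is_lattice_homot hMM' latM).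
set N := lact (invmx B1) M'.
have hN : leqv N (latm (invmx B1 *m BM)) := leqv_trans (lact_leqv _ hBM) (lact_latm _ _).
have [cl1 cl2] := leqv_closed hN.
have Nadd := cl1 (@latm_add _).
have Nsc := cl2 (@latm_scale _).
have hL1 : leqv (lact (invmx B1) L') (latm 1).
  by apply: leqv_trans (lact_leqv _ hL') _; apply: leqv_trans (lact_latm _ _) _; rewrite mulVmx.
have hLP : leqv (lact (invmx B1) (lscale P L')) (lscale P (latm 1)).
  exact: leqv_trans (lact_scale _ _ _) (lscale_leqv _ hL1).
have Nsub1 : lsub' N (latm 1) := lsub_leqv (leqv_refl _) hL1 (@lact_sub (invmx B1) _ _ sub1).
have Nnot1 : ~ lsub' (latm 1) N.
  move=> h; apply: nsub1; apply: (lact_sub_inv iB1u).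
  exact: lsub_leqv (leqv_sym hL1) (leqv_refl _) h.
have NP : lsub' (lscale P (latm 1)) N := lsub_leqv hLP (leqv_refl _) (@lact_sub (invmx B1) _ _ sub2).
have NnotP : ~ lsub' N (lscale P (latm 1)).
  move=> h; apply: nsub2; apply: (lact_sub_inv iB1u).
  exact: lsub_leqv (leqv_refl _) (leqv_sym hLP) h.
have fin : forall Q, leqv N (latm Q) -> homot M (latm (B *m Q)).
  move=> Q hQ.
  have e1 : leqv M' (latm (l *: (B *m Q))).
    apply: leqv_trans (leqv_sym (lact_inv' M' B1u)) _.
    apply: leqv_trans (lact_leqv _ hQ) _.
    by apply: leqv_trans (lact_latm _ _) _; rewrite /B1 -scalemxAl.
  apply: homot_trans (homot_leqv_r e1 hMM') _.
  by apply: homot_sym; apply: homot_latm_scale.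
case: (CL Nadd Nsc Nsub1 Nnot1 NP NnotP) => [[a [ha hQ]]|hQ].
  by left; exists a; split => //; apply: fin.
by right; apply: fin.
Qed.

Lemma adj_homot L M L2 M2 : adj p v L M -> homot L L2 -> homot M M2 -> adj p v L2 M2.
Proof.
move=> [lL [lM [L' [M' [h1 [h2 rest]]]]]] hL hM.
split; first exact: is_lattice_homot hL lL.
split; first exact: is_lattice_homot hM lM.
exists L', M'; split; first exact: homot_trans (homot_sym hL) h1.
by split => //; exact: homot_trans (homot_sym hM) h2.
Qed.
Lemma lscale_sub_inv l L M : l != 0 -> lsub' (lscale l L) (lscale l M) -> lsub' L M.
Proof.
move=> l0 h y hy; have [z [hz e]] := h (l *: y) (ex_intro _ y (conj hy erefl)).
have -> : y = z; last by [].
by move/(congr1 (fun w => l^-1 *: w)): e; rewrite !scalerA mulVf // !scale1r.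
Qed.
Lemma lscale_sub l L M : lsub' L M -> lsub' (lscale l L) (lscale l M).
Proof. by move=> h y [z [hz ->]]; exists z; split => //; apply: h. Qed.
Lemma adj_sym L M : adj p v L M -> adj p v M L.
Proof.
move=> [lL [lM [L' [M' [h1 [h2 [[s1 n1] [s2 n2]]]]]]]].
split => //; split => //; exists M', (lscale P L'); split => //; split.
  by apply: homot_trans h1 _; apply: homot_scale; apply: P_neq0.
split; first by split.
split; first exact: lscale_sub.
by move=> h; apply: n1; apply: (lscale_sub_inv P_neq0).
Qed.
Lemma adj_types L M i j : adj p v L M -> vtype v L i -> vtype v M j -> i != j.
Proof.
move=> hadj hi hj.
have [B [Bu hB]] := lat_unit_basis (proj1 hadj).
have B0 : \det B != 0 by rewrite -unitfE -unitmxE.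
have ei := vtype_basis Bu hB hi.
have key : forall Q, \det Q = P -> homot M (latm (B *m Q)) -> j = odd `|(v (\det B) + 1)%R|%N.
  move=> Q dQ hQ.
  have BQu : B *m Q \in unitmx by rewrite unitmx_mul Bu unitmxE dQ unitfE P_neq0.
  have := vtype_basis BQu (leqv_refl _) (vtype_homot hQ hj).
  by rewrite det_mulmx dQ vM ?P_neq0 // vP.
have ej : j = odd `|(v (\det B) + 1)%R|%N.
  case: (ADJ hadj Bu hB) => [[a [_ h]]|h]; apply: (key _ _ h); rewrite mx2_det; ring.
rewrite ei ej; apply/negP => /eqP; lia.
Qed.

(* ---------- standard apartment ---------- *)
Lemma vPn (n : nat) : v (P ^+ n) = n.
Proof.
elim: n => [|n IH]; first by rewrite expr0 v1.
by rewrite exprS vM ?expf_neq0 ?P_neq0 // vP IH -addn1 PoszD addrC.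
Qed.
Lemma vPz (m : int) : v (P ^ m) = m.
Proof.
case: m => n; first by rewrite -exprnP vPn.
rewrite NegzE -exprnN vV ?expf_neq0 ?P_neq0 // vPn; lia.
Qed.
Lemma Pz_neq0 (m : int) : P ^ m != 0.
Proof. by rewrite expfz_neq0 // P_neq0. Qed.
Lemma small_Pz (m : int) : 0 <= m -> small 0 (P ^ m).
Proof. by move=> hm; right; rewrite vPz. Qed.
Lemma PzD (m n : int) : P ^ (m + n) = P ^ m * P ^ n.
Proof. by rewrite expfzDr ?P_neq0. Qed.

Definition dg (m : int) := mx2 1 0 0 (P ^ m).
Definition X (m : int) := latm (dg m).
Definition T (m : int) : chamber K := (X m, X (m + 1)).
Lemma dg_unit m : dg m \in unitmx.
Proof. by rewrite mx2_unit mul1r mulr0 subr0 Pz_neq0. Qed.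
Lemma det_dg m : \det (dg m) = P ^ m.
Proof. by rewrite mx2_det; ring. Qed.
Lemma lactX g m : leqv (lact g (X m)) (latm (g *m dg m)).
Proof. exact: lact_latm. Qed.
Lemma vtype_gX g m : \det g = 1 -> vtype v (lact g (X m)) (odd `|m|%N).
Proof.
move=> dg1; apply: vtype_leqv (leqv_sym (lactX g m)) _.
have u : g *m dg m \in unitmx by rewrite unitmx_mul dg_unit unitmxE dg1 unitr1.
by have := vtype_latm u; rewrite det_mulmx dg1 mul1r det_dg vPz.
Qed.
Lemma is_lattice_gX g m : g \in unitmx -> is_lattice v (lact g (X m)).
Proof.
move=> gu; apply: is_lattice_leqv (leqv_sym (lactX g m)) _.
by apply: is_lattice_latm; rewrite unitmx_mul gu dg_unit.
Qed.

Lemma fixL g (m n : int) a : small 0 a -> m <= n ->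
  leqv (latm (g *m mx2 1 0 (a * P ^ n) 1 *m dg m)) (latm (g *m dg m)).
Proof.
move=> ha mn.
have e : P ^ n = P ^ m * P ^ (n - m) by rewrite -PzD addrC subrK.
have -> : g *m mx2 1 0 (a * P ^ n) 1 *m dg m = (g *m dg m) *m mx2 1 0 (a * P ^ (n - m)) 1.
  by rewrite -!mulmxA /dg !mx2_mul e; congr (_ *m mx2 _ _ _ _); ring.
apply: latm_unimod; apply: unimod_mx2; rewrite ?mulr1 ?mulr0 ?mul0r ?subr0 ?v1 //;
  try (by left); try exact: s01; try exact: oner_neq0.
by apply: small_mul0 => //; apply: small_Pz; rewrite subr_ge0.
Qed.
Lemma fixU g (m n : int) b : small 0 b -> n <= m ->
  leqv (latm (g *m mx2 1 (b * P ^ (- n)) 0 1 *m dg m)) (latm (g *m dg m)).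
Proof.
move=> hb mn.
have e : P ^ (- n) * P ^ m = P ^ (m - n) by rewrite -PzD addrC.
have -> : g *m mx2 1 (b * P ^ (- n)) 0 1 *m dg m = (g *m dg m) *m mx2 1 (b * P ^ (m - n)) 0 1.
  by rewrite -!mulmxA /dg !mx2_mul -e; congr (_ *m mx2 _ _ _ _); ring.
apply: latm_unimod; apply: unimod_mx2; rewrite ?mulr1 ?mulr0 ?mul0r ?subr0 ?v1 //;
  try (by left); try exact: s01; try exact: oner_neq0.
by apply: small_mul0 => //; apply: small_Pz; rewrite subr_ge0.
Qed.

Lemma ADJ' L M B : adj p v L M -> B \in unitmx -> leqv L (latm B) ->
  homot M (latm (B *m mx2 1 0 0 P)) \/
  (exists b, small 0 b /\ homot M (latm (B *m mx2 P b 0 1))).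
Proof.
move=> hadj Bu hB.
case: (ADJ hadj Bu hB) => [[a [ha h]]|h]; last by right; exists 0; split => //; left.
case: (classic (small 1 a)) => [/small_vP [t [ht et]]|na].
  left; apply: (homot_leqv_r _ h).
  have -> : B *m mx2 1 0 a P = (B *m mx2 1 0 0 P) *m mx2 1 0 t 1.
    by rewrite -mulmxA mx2_mul et; congr (_ *m mx2 _ _ _ _); ring.
  apply: latm_unimod; apply: unimod_mx2; rewrite ?mulr1 ?mulr0 ?mul0r ?subr0 ?v1 //;
    try (by left); try exact: s01; exact: oner_neq0.
have [a0 va] := unit_of ha na.
right; exists a^-1; split; first exact: s0V.
apply: (homot_leqv_r _ h); apply: leqv_sym.
have -> : B *m mx2 P a^-1 0 1 = (B *m mx2 1 0 a P) *m mx2 P a^-1 (- a) 0.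
  by rewrite -mulmxA mx2_mul; congr (_ *m mx2 _ _ _ _); field.
apply: latm_unimod; apply: unimod_mx2; try exact: s0P; try exact: s0V; try (by left).
  exact: small_opp.
have -> : P * 0 - a^-1 * - a = 1 by field.
by rewrite oner_neq0. 
have -> : P * 0 - a^-1 * - a = 1 by field.
by rewrite v1.
Qed.

Lemma ceq_refl C : ceq C C. Proof. by left; split; apply: homot_refl. Qed.
Lemma ceq_sym C D : ceq C D -> ceq D C.
Proof. by case=> -[h1 h2]; [left|right]; split; apply: homot_sym. Qed.
Lemma ceq_trans C D E : ceq C D -> ceq D E -> ceq C E.
Proof.
case=> -[h1 h2] [] [h3 h4].
- by left; split; apply: homot_trans; eauto.
- by right; split; apply: homot_trans; eauto.
- by right; split; apply: homot_trans; eauto.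
- by left; split; apply: homot_trans; eauto.
Qed.
Lemma ceq_cact g C D : ceq C D -> ceq (cact g C) (cact g D).
Proof. by case=> -[h1 h2]; [left|right]; split; apply: homot_lact. Qed.
Lemma chamber_ceq C D : is_chamber p v C -> ceq C D -> is_chamber p v D.
Proof.
rewrite /is_chamber => h [[h1 h2]|[h1 h2]]; first exact: adj_homot h h1 h2.
by apply: adj_sym; apply: adj_homot h h1 h2.
Qed.
Lemma ceq_pair L M L' M' : homot L L' -> homot M M' -> ceq (L, M) (L', M').
Proof. by move=> h1 h2; left. Qed.
Lemma ceq_pair' L M L' M' : homot L M' -> homot M L' -> ceq (L, M) (L', M').
Proof. by move=> h1 h2; right. Qed.
Lemma homot_ll B B' : leqv (latm B) (latm B') -> homot (latm B) (latm B').
Proof. exact: homot_leqv. Qed.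

Lemma dg0 : dg 0 = 1. Proof. by rewrite /dg expr0z mx2_one. Qed.
Lemma dg1 : dg 1 = mx2 1 0 0 P. Proof. by rewrite /dg expr1z. Qed.

Lemma scalar_homot g l L : l != 0 -> homot (lact g L) (lact (l *: g) L).
Proof.
move=> l0; apply: (homot_leqv_r _ (homot_scale (lact g L) l0)).
move=> y; split.
  by move=> [z [[w [hw ->]] ->]]; exists w; split => //; rewrite scalemxAl.
by move=> [w [hw ->]]; exists (g *m w); split; [exists w|rewrite scalemxAl].
Qed.

Lemma detfix g0 : g0 \in unitmx -> exists g, \det g = 1 /\
  ((forall m, homot (lact g (X m)) (lact g0 (X m))) \/
   (forall m, homot (lact g (X m)) (lact g0 (X (1 - m))))).
Proof.
move=> g0u.
have even : forall h, h \in unitmx -> forall k, v (\det h) = k + k ->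
    exists g, \det g = 1 /\ forall m, homot (lact g (X m)) (lact h (X m)).
  move=> h hu k vk.
  have d0 : \det h != 0 by rewrite -unitfE -unitmxE.
  set u := P ^ (k + k) / \det h.
  have u0 : u != 0 by rewrite mulf_neq0 ?invr_neq0 ?Pz_neq0.
  have vu : v u = 0 by rewrite vM ?invr_neq0 ?Pz_neq0 // vV // vPz vk subrr.
  exists (P ^ (- k) *: (h *m mx2 u 0 0 1)); split.
    rewrite detZ det_mulmx mx2_det /u.
    have e : P ^ (k + k) = P ^ k * P ^ k by rewrite PzD.
    have e' : P ^ (- k) * P ^ k = 1 by rewrite -PzD addNr expr0z.
    rewrite e expr2.
    have -> : P ^ (- k) * P ^ (- k) * (\det h * (P ^ k * P ^ k / \det h * 1 - 0 * 0))
      = (P ^ (- k) * P ^ k) * (P ^ (- k) * P ^ k) by field.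
    by rewrite e' mulr1.
  move=> m; apply: homot_sym; apply: homot_trans (scalar_homot _ _ (Pz_neq0 (- k))).
  apply: homot_leqv; apply: (leqv_trans (lactX h m)); apply: leqv_sym.
  apply: (leqv_trans (lactX _ m)).
  have -> : h *m mx2 u 0 0 1 *m dg m = (h *m dg m) *m mx2 u 0 0 1.
    by rewrite -!mulmxA /dg !mx2_mul; congr (_ *m mx2 _ _ _ _); ring.
  apply: latm_unimod; apply: unimod_mx2; rewrite ?mulr1 ?mulr0 ?mul0r ?subr0 //;
    try (by left); try exact: s01; right; by rewrite vu.
have [k [vk|vk]] : exists k : int, v (\det g0) = k + k \/ v (\det g0) = k + k + 1.
  by exists (v (\det g0) %/ 2)%Z; lia.
  have [g [dg1 h]] := even g0 g0u k vk.
  by exists g; split => //; left.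
set sg := mx2 0 1 P 0.
have sgu : sg \in unitmx by rewrite mx2_unit mul0r mul1r sub0r oppr_eq0 P_neq0.
have h1u : g0 *m sg \in unitmx by rewrite unitmx_mul g0u sgu.
have d0 : \det g0 != 0 by rewrite -unitfE -unitmxE.
have : v (\det (g0 *m sg)) = (k + 1) + (k + 1).
  rewrite det_mulmx mx2_det vM //; last by rewrite mul0r mul1r sub0r oppr_eq0 P_neq0.
  rewrite mul0r mul1r sub0r vN vP vk; lia.
move=> /(even _ h1u) [g [dg1 h]].
exists g; split => //; right => m.
apply: homot_trans (h m) _.
apply: (homot_leqv_l (lact_comp _ _ _)).
apply: homot_lact.
apply: (homot_leqv_l (leqv_sym (lact_latm _ _))).
have -> : sg *m dg m = P ^ m *: (dg (1 - m) *m mx2 0 1 1 0).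
  rewrite /sg /dg !mx2_mul mx2_scale.
  have e : P ^ m * P ^ (1 - m) = P by rewrite -PzD addrC subrK expr1z.
  move: e; set a := P ^ m; set b := P ^ (1 - m) => e.
  by rewrite -e; congr mx2; ring.
apply: homot_sym; apply: homot_trans (homot_latm_scale _ (Pz_neq0 m)).
apply: homot_leqv; apply: leqv_sym; apply: latm_unimod.
apply: unimod_mx2; rewrite ?mulr1 ?mulr0 ?mul0r ?sub0r; try (by left); try exact: s01.
  by rewrite oppr_eq0 oner_neq0.
by rewrite vN v1.
Qed.

Lemma mx2_unitE (a b c d e : K) : a * d - b * c = e -> e != 0 -> mx2 a b c d \in unitmx.
Proof. by move=> <-; rewrite mx2_unit. Qed.
Lemma T1 C : is_chamber p v C -> exists g, \det g = 1 /\ ceq (cact g (T 0)) C.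
Proof.
move=> hC.
have [B [Bu hB]] := lat_unit_basis (proj1 hC).
have B0 : \det B != 0 by rewrite -unitfE -unitmxE.
have hB' : homot (latm B) C.1 by apply: homot_leqv; apply: leqv_sym.
have [g0 [g0u [h0 h1]]] : exists g0, g0 \in unitmx /\ homot (lact g0 (X 0)) C.1 /\ homot (lact g0 (X 1)) C.2.
  case: (ADJ hC Bu hB) => [[a [ha h]]|h].
  - exists (B *m mx2 1 0 a 1); split.
      by rewrite unitmx_mul Bu (@mx2_unitE _ _ _ _ 1) ?oner_neq0 //; ring.
    split.
      apply: homot_trans hB'; apply: homot_leqv; apply: (leqv_trans (lactX _ _)).
      rewrite dg0 mulmx1; apply: latm_unimod; apply: unimod_mx2; rewrite ?mulr1 ?mul1r ?mulr0 ?mul0r ?subr0 ?sub0r ?vN ?v1 //;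
        try exact: s01; try (by left); exact: oner_neq0.
    apply: homot_trans (homot_sym h); apply: homot_leqv; apply: (leqv_trans (lactX _ _)).
    by rewrite dg1 -mulmxA mx2_mul !mulr1 !mul1r !mulr0 !mul0r !addr0 !add0r.
  - exists (B *m mx2 0 1 1 0); split.
      by rewrite unitmx_mul Bu (@mx2_unitE _ _ _ _ (-1)) ?oppr_eq0 ?oner_neq0 //; ring.
    split.
      apply: homot_trans hB'; apply: homot_leqv; apply: (leqv_trans (lactX _ _)).
      rewrite dg0 mulmx1; apply: latm_unimod; apply: unimod_mx2; rewrite ?mulr1 ?mul1r ?mulr0 ?mul0r ?subr0 ?sub0r ?vN ?v1 //;
        try exact: s01; try (by left); by rewrite oppr_eq0 oner_neq0.
    apply: homot_trans (homot_sym h); apply: homot_leqv; apply: (leqv_trans (lactX _ _)).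
    have -> : B *m mx2 0 1 1 0 *m dg 1 = (B *m mx2 P 0 0 1) *m mx2 0 1 1 0.
      by rewrite dg1 -!mulmxA !mx2_mul; congr (_ *m mx2 _ _ _ _); ring.
    apply: latm_unimod; apply: unimod_mx2; rewrite ?mulr1 ?mul1r ?mulr0 ?mul0r ?subr0 ?sub0r ?vN ?v1 //;
        try exact: s01; try (by left); by rewrite oppr_eq0 oner_neq0.
have [g [dg1 [h|h]]] := detfix g0u; exists g; split => //.
  by left; rewrite /= add0r; split; apply: homot_trans (h _) _.
right; rewrite /= add0r; split.
  by apply: homot_trans (h _) _; rewrite subr0.
by apply: homot_trans (h _) _; rewrite subrr.
Qed.

Lemma other_comp E Y : is_chamber p v E -> (Y = E.1 \/ Y = E.2) ->
  exists Z, adj p v Y Z /\ ceq (Y, Z) E.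
Proof.
case: E => E1 E2 /= hE [->|->].
  by exists E2; split => //; apply: ceq_refl.
exists E1; split; first exact: adj_sym.
by right; split; apply: homot_refl.
Qed.
Lemma pivot (A B Xv : lat K) D : ceq (A, B) D -> (Xv = D.1 \/ Xv = D.2) -> homot A Xv \/ homot B Xv.
Proof. by case=> -[/= h1 h2] [->|->]; auto. Qed.
Lemma unit_det1 g : \det g = 1 -> g \in unitmx.
Proof. by move=> h; rewrite unitmxE h unitr1. Qed.

Lemma stepF (m : int) g D E (t : bool) : 0 <= m -> \det g = 1 ->
  ceq (cact g (T m)) D -> iadj p v t D E -> t = odd `|(m + 1)%R|%N ->
  exists g', \det g' = 1 /\ (forall k, k <= m + 1 -> homot (lact g' (X k)) (lact g (X k))) /\
    ceq (cact g' (T (m + 1))) E.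
Proof.
move=> m0 dg1 hgD [hD [hE [nDE [Xv [Yv [hX [hY [hXY hXt]]]]]]]] ht.
have gu := unit_det1 dg1.
set A := lact g (X m); set B := lact g (X (m + 1)).
have tA := vtype_gX m dg1; have tB := vtype_gX (m + 1) dg1.
have hBX : homot B Xv.
  case: (pivot hgD hX) => // hAX.
  have := vtype_uniq (vtype_homot (homot_sym hAX) hXt) tA.
  rewrite ht; lia.
have hBY := homot_trans hBX hXY.
have [Z [hYZ hE']] := other_comp hE hY.
have hBZ : adj p v B Z := adj_homot hYZ (homot_sym hBY) (homot_refl _).
have Bu : g *m dg (m + 1) \in unitmx by rewrite unitmx_mul gu dg_unit.
case: (ADJ hBZ Bu (lactX _ _)) => [[a [ha hZ]]|hZ].
- exists (g *m mx2 1 0 (a * P ^ (m + 1)) 1); split.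
    by rewrite det_mulmx dg1 mx2_det; ring.
  split.
    move=> k hk; apply: homot_leqv; apply: (leqv_trans (lactX _ _)).
    apply: leqv_trans (fixL _ ha hk) (leqv_sym (lactX _ _)).
  apply: (ceq_trans _ hE'); left; split => /=.
    apply: homot_trans hBY; apply: homot_leqv; apply: (leqv_trans (lactX _ _)).
    exact: leqv_trans (fixL _ ha (lexx _)) (leqv_sym (lactX _ _)).
  apply: homot_sym; apply: homot_trans hZ _; apply: homot_leqv; apply: leqv_sym.
  apply: (leqv_trans (lactX _ _)).
  have -> : g *m mx2 1 0 (a * P ^ (m + 1)) 1 *m dg (m + 1 + 1) = g *m dg (m + 1) *m mx2 1 0 a P.
    rewrite -!mulmxA /dg !mx2_mul PzD expr1z; congr (_ *m mx2 _ _ _ _); ring.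
  exact: leqv_refl.
- exfalso; apply: nDE.
  apply: (ceq_trans _ hE').
  apply: ceq_trans (ceq_sym hgD) _; right => /=; split; last exact: hBY.
  apply: homot_sym; apply: homot_trans hZ _.
  apply: homot_leqv_r (leqv_sym (lactX _ _)) _.
  have -> : g *m dg (m + 1) *m mx2 P 0 0 1 = P *: (g *m dg m).
    have e : dg (m + 1) *m mx2 P 0 0 1 = P *: dg m.
      by rewrite /dg mx2_mul mx2_scale PzD expr1z; congr mx2; ring.
    by rewrite -mulmxA e scalemxAr.
  by apply: homot_sym; apply: homot_latm_scale; apply: P_neq0.
Qed.

Lemma stepB (m : int) g D E (t : bool) : \det g = 1 ->
  ceq (cact g (T m)) D -> iadj p v t D E -> t = odd `|m|%N ->
  exists g', \det g' = 1 /\ (forall k, m <= k -> homot (lact g' (X k)) (lact g (X k))) /\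
    ceq (cact g' (T (m - 1))) E.
Proof.
move=> dg1 hgD [hD [hE [nDE [Xv [Yv [hX [hY [hXY hXt]]]]]]]] ht.
have gu := unit_det1 dg1.
set A := lact g (X m); set B := lact g (X (m + 1)).
have tA := vtype_gX m dg1; have tB := vtype_gX (m + 1) dg1.
have hAX : homot A Xv.
  case: (pivot hgD hX) => // hBX.
  have := vtype_uniq (vtype_homot (homot_sym hBX) hXt) tB.
  rewrite ht; lia.
have hAY := homot_trans hAX hXY.
have [Z [hYZ hE']] := other_comp hE hY.
have hAZ : adj p v A Z := adj_homot hYZ (homot_sym hAY) (homot_refl _).
have Au : g *m dg m \in unitmx by rewrite unitmx_mul gu dg_unit.
case: (ADJ' hAZ Au (lactX _ _)) => [hZ|[b [hb hZ]]].
- exfalso; apply: nDE.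
  apply: (ceq_trans _ hE').
  apply: ceq_trans (ceq_sym hgD) _; left => /=; split; first exact: hAY.
  apply: homot_sym; apply: homot_trans hZ _.
  apply: homot_leqv; apply: leqv_sym; apply: (leqv_trans (lactX _ _)).
  have -> : g *m dg (m + 1) = g *m dg m *m mx2 1 0 0 P.
    by rewrite -mulmxA /dg !mx2_mul PzD expr1z; congr (_ *m mx2 _ _ _ _); ring.
  exact: leqv_refl.
- exists (g *m mx2 1 (b * P ^ (- m)) 0 1); split.
    by rewrite det_mulmx dg1 mx2_det; ring.
  split.
    move=> k hk; apply: homot_leqv; apply: (leqv_trans (lactX _ _)).
    apply: leqv_trans (fixU _ hb hk) (leqv_sym (lactX _ _)).
  apply: (ceq_trans _ hE'); right; rewrite /= subrK; split.
    apply: homot_sym; apply: homot_trans hZ _.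
    apply: homot_leqv_r (leqv_sym (lactX _ _)) _.
    have e1 : P ^ (- m) * P ^ (m - 1) = P^-1.
      by rewrite -PzD addKr exprN1.
    have e2 : P * P ^ (m - 1) = P ^ m.
      by rewrite -{1}[P]expr1z -PzD addrC subrK.
    have -> : g *m dg m *m mx2 P b 0 1 = P *: (g *m mx2 1 (b * P ^ (- m)) 0 1 *m dg (m - 1)).
      have e : dg m *m mx2 P b 0 1 = P *: (mx2 1 (b * P ^ (- m)) 0 1 *m dg (m - 1)).
        rewrite /dg !mx2_mul mx2_scale -e2.
        move: e1; set x := P ^ (- m); set y := P ^ (m - 1) => e1.
        have P0 := P_neq0.
        congr mx2; try ring.
        by rewrite !mul1r mul0r addr0 add0r -mulrA e1 mulrCA mulfV // mulr1.
      by rewrite -mulmxA e -scalemxAr mulmxA.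
    by apply: homot_sym; apply: homot_latm_scale; apply: P_neq0.
  apply: homot_trans hAY; apply: homot_leqv; apply: (leqv_trans (lactX _ _)).
  exact: leqv_trans (fixU _ hb (lexx _)) (leqv_sym (lactX _ _)).
Qed.

Fixpoint alt (b : bool) (ws : seq (bool * chamber K)) : Prop :=
  match ws with [::] => True | (i, _) :: ws' => i = b /\ alt (~~ b) ws' end.

Lemma ceq_cact_homot g g' C : homot (lact g C.1) (lact g' C.1) -> homot (lact g C.2) (lact g' C.2) ->
  ceq (cact g C) (cact g' C).
Proof. by move=> h1 h2; left. Qed.

Lemma GF C0 C' ws : forall (m : nat) D g, \det g = 1 -> ceq (cact g (T 0)) C0 ->
  ceq (cact g (T m)) D -> gallery p v D ws C' -> alt (~~ odd m) ws ->
  exists g', \det g' = 1 /\ ceq (cact g' (T 0)) C0 /\ ceq (cact g' (T (m + size ws)%N)) C'.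
Proof.
elim: ws => [|[i E] ws IH] m D g dg1 h0 hD /=.
  by move=> hDC' _; exists g; split => //; split => //; rewrite addn0; apply: ceq_trans hD hDC'.
move=> [hDE hg] [hi halt].
have ht : i = odd `|(m%:Z + 1)%R|%N by rewrite hi; lia.
have m0 : 0 <= m%:Z by [].
have [g' [dg' [hfix hE]]] := stepF m0 dg1 hD hDE ht.
have h0' : ceq (cact g' (T 0)) C0.
  apply: ceq_trans h0; apply: ceq_cact_homot; apply: hfix => //=; lia.
have hE' : ceq (cact g' (T m.+1)) E by rewrite -addn1 PoszD.
have halt' : alt (~~ odd m.+1) ws by rewrite oddS.
have [g'' [dg'' [h0'' hC]]] := IH m.+1 E g' dg' h0' hE' hg halt'.
by exists g''; split => //; split => //; rewrite -addSnnS.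
Qed.

Lemma GB C0 C' ws : forall (m : nat) D g, \det g = 1 -> ceq (cact g (T 0)) C0 ->
  ceq (cact g (T (- m%:Z))) D -> gallery p v D ws C' -> alt (odd m) ws ->
  exists g', \det g' = 1 /\ ceq (cact g' (T 0)) C0 /\ ceq (cact g' (T (- (m + size ws)%N%:Z))) C'.
Proof.
elim: ws => [|[i E] ws IH] m D g dg1 h0 hD /=.
  by move=> hDC' _; exists g; split => //; split => //; rewrite addn0; apply: ceq_trans hD hDC'.
move=> [hDE hg] [hi halt].
have ht : i = odd `|(- m%:Z)%R|%N by rewrite hi; lia.
have [g' [dg' [hfix hE]]] := stepB dg1 hD hDE ht.
have h0' : ceq (cact g' (T 0)) C0.
  apply: ceq_trans h0; apply: ceq_cact_homot; apply: hfix => //=; lia.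
have hE' : ceq (cact g' (T (- m.+1%:Z))) E.
  by have -> : - m.+1%:Z = - m%:Z - 1 by lia.
have [g'' [dg'' [h0'' hC]]] := IH m.+1 E g' dg' h0' hE' hg halt.
by exists g''; split => //; split => //; rewrite -addSnnS.
Qed.

Fixpoint altc (ws : seq (bool * chamber K)) : Prop :=
  match ws with
  | (i, _) :: (((j, _) :: _) as ws') => i != j /\ altc ws'
  | _ => True
  end.
Lemma altc_alt i D ws : altc ((i, D) :: ws) -> alt i ((i, D) :: ws).
Proof.
elim: ws i D => [|[j E] ws IH] i D /=; first by split.
move=> [ij h]; split => //.
have e : ~~ i = j by clear -ij; move: ij; case: i; case: j.
rewrite e; exact: (IH _ _ h).
Qed.
Lemma altc_or ws : altc ws \/
  exists pre i D1 D2 post, ws = pre ++ (i, D1) :: (i, D2) :: post.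
Proof.
elim: ws => [|[i D1] ws IH]; first by left.
case: ws IH => [|[j D2] ws] IH; first by left.
case: (eqVneq i j) => [<-|ij].
  by right; exists [::], i, D1, D2, ws.
case: IH => [h|[pre [k [E1 [E2 [post e]]]]]]; first by left.
by right; exists ((i, D1) :: pre), k, E1, E2, post; rewrite e.
Qed.

Lemma gallery_cat C pre rest C' : gallery p v C (pre ++ rest) C' <->
  gallery p v C pre (last C (map snd pre)) /\ gallery p v (last C (map snd pre)) rest C'.
Proof.
elim: pre C => [|[i D] pre IH] C /=.
  by split; [move=> h; split => //; apply: ceq_refl|case].
rewrite IH; split; first by move=> [h1 [h2 h3]].
by move=> [[h1 h2] h3].
Qed.

Lemma ceq_comp C D Xv : ceq C D -> (Xv = D.1 \/ Xv = D.2) ->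
  exists X', (X' = C.1 \/ X' = C.2) /\ homot X' Xv.
Proof.
case=> -[h1 h2] [->|->].
- by exists C.1; split; [left|].
- by exists C.2; split; [right|].
- by exists C.2; split; [right|].
- by exists C.1; split; [left|].
Qed.

Lemma gallery_ceq_l D0 D2 ws C' : ceq D0 D2 -> is_chamber p v D0 ->
  gallery p v D2 ws C' -> gallery p v D0 ws C'.
Proof.
case: ws => [|[j E] ws] h hD0 /=; first exact: ceq_trans.
move=> [[_ [hE [nDE [Xv [Yv [hX [hY [hXY hXt]]]]]]]] hg]; split => //.
split => //; split => //; split.
  by move=> h'; apply: nDE; apply: ceq_trans (ceq_sym h) h'.
have [X' [hX' hX'X]] := ceq_comp h hX.
exists X', Yv; split => //; split => //; split; first exact: homot_trans hX'X hXY.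
exact: vtype_homot (homot_sym hX'X) hXt.
Qed.

Lemma iadj_comp i D0 D1 D2 : iadj p v i D0 D1 -> iadj p v i D1 D2 -> ~ ceq D0 D2 -> iadj p v i D0 D2.
Proof.
move=> [h0 [h1 [_ [X0 [Y1 [hX0 [hY1 [hXY1 ht0]]]]]]]] [_ [h2 [_ [X1 [Y2 [hX1 [hY2 [hXY2 ht1]]]]]]]] n02.
split => //; split => //; split => //; exists X0, Y2; split => //; split => //; split => //.
have tY1 := vtype_homot hXY1 ht0.
apply: (homot_trans hXY1 (homot_trans _ hXY2)).
case: hY1 => eY; case: hX1 => eX; rewrite eY eX; try exact: homot_refl.
- by rewrite eY in tY1; rewrite eX in ht1; move: (adj_types h1 tY1 ht1); rewrite eqxx.
- by rewrite eY in tY1; rewrite eX in ht1; move: (adj_types h1 ht1 tY1); rewrite eqxx.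
Qed.

Lemma minimal_altc C ws C' : gallery p v C ws C' -> is_chamber p v C ->
  (forall ws', gallery p v C ws' C' -> (size ws <= size ws')%N) -> altc ws.
Proof.
move=> hg hC hmin; case: (altc_or ws) => // -[pre [i [D1 [D2 [post e]]]]].
exfalso; rewrite e in hg hmin.
move: hg => /gallery_cat [hpre /= [h01 [h12 hpost]]].
set D0 := last C (map snd pre) in hpre h01 hpost.
have hD0 : is_chamber p v D0 by case: h01.
case: (classic (ceq D0 D2)) => [c02|n02].
  have := hmin (cat pre post); rewrite !size_cat /=.
  have -> : (size pre + (size post).+2 <= size pre + size post)%N = false by lia.
  move=> H; apply: notF; apply: H; apply/gallery_cat; split => //.
  exact: gallery_ceq_l c02 hD0 hpost.
have := hmin (cat pre ((i, D2) :: post)); rewrite !size_cat /=.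
have -> : (size pre + (size post).+2 <= size pre + (size post).+1)%N = false by lia.
move=> H; apply: notF; apply: H; apply/gallery_cat; split => //=; split => //.
exact: iadj_comp h01 h12 n02.
Qed.

Definition stdi (w : seq bool) : int :=
  if w is true :: _ then (size w)%:Z else - (size w)%:Z.

Lemma to_std C C' w : is_chamber p v C -> weyl_dist p v C C' w ->
  exists g, \det g = 1 /\ ceq (cact g (T 0)) C /\ ceq (cact g (T (stdi w))) C'.
Proof.
move=> hC [ws [hg [hw hmin]]].
have hal := minimal_altc hg hC hmin.
have [g0 [dg0' h0]] := T1 hC.
case: ws hg hw hmin hal => [|[i D] ws] hg hw hmin hal.
  by exists g0; split => //; split => //; rewrite -hw /= oppr0; apply: ceq_trans h0 hg.
have halt := altc_alt hal.
rewrite -hw /stdi /=.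
case: i hg halt {hal hmin hw} => hg halt.
  have := GF (m := 0) dg0' h0 h0 hg halt; rewrite add0n size_map //.
have h0' : ceq (cact g0 (T (- (0%N)%:Z))) C by rewrite oppr0.
have := GB dg0' h0 h0' hg halt; rewrite add0n size_map //.
Qed.

Definition msmall n (A : 'M[K]_2) := forall i j, small n (A i j).
Lemma msmall_mx2 n a b c d : msmall n (mx2 a b c d) <-> [/\ small n a, small n b, small n c & small n d].
Proof.
split; first by move=> h; split; [have := h 0 0|have := h 0 1|have := h 1 0|have := h 1 1]; rewrite mx2S.
by move=> [ha hb hc hd] i j; case: (ord2P i) => ->; case: (ord2P j) => ->; rewrite mx2S.
Qed.
Lemma msmall_le m n A : m <= n -> msmall n A -> msmall m A.
Proof. by move=> mn h i j; apply: small_le mn (h i j). Qed.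
Lemma msmall_add n A B : msmall n A -> msmall n B -> msmall n (A + B).
Proof. by move=> hA hB i j; rewrite mxE; apply: small_add. Qed.
Lemma msmall_opp n A : msmall n A -> msmall n (- A).
Proof. by move=> hA i j; rewrite mxE; apply: small_opp. Qed.
Lemma msmall_mul a b A B : msmall a A -> msmall b B -> msmall (a + b) (A *m B).
Proof.
rewrite [A]mx2E [B]mx2E mx2_mul => /msmall_mx2 [h1 h2 h3 h4] /msmall_mx2 [k1 k2 k3 k4].
by apply/msmall_mx2; split; apply: small_add; apply: small_mul.
Qed.
Lemma msmall_scale a b x A : small a x -> msmall b A -> msmall (a + b) (x *: A).
Proof. by move=> hx hA i j; rewrite mxE; apply: small_mul. Qed.
Lemma small_min m n x : small (Num.min m n) x \/ True.
Proof. by right. Qed.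
Lemma msmall_any A m : exists n, n <= m /\ msmall n A.
Proof.
have [n1 [l1 h1]] := small_any (A 0 0) m.
have [n2 [l2 h2]] := small_any (A 0 1) n1.
have [n3 [l3 h3]] := small_any (A 1 0) n2.
have [n4 [l4 h4]] := small_any (A 1 1) n3.
exists n4; split; first by lia.
rewrite [A]mx2E; apply/msmall_mx2; split => //; apply: small_le h1 || apply: small_le h2 || apply: small_le h3; lia.
Qed.
Lemma msmall1 : msmall 0 (1 : 'M[K]_2).
Proof. by rewrite mx2_one; apply/msmall_mx2; split; try exact: s01; left. Qed.
Lemma small_inv x : x != 0 -> small (- v x) x^-1.
Proof. by move=> x0; right; rewrite vV. Qed.

Lemma det_diff n b (y F : 'M[K]_2) : 0 <= n -> b <= 0 -> msmall n F -> msmall b y ->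
  small (n + b) (\det (y + F) - \det y).
Proof.
move=> n0 b0; rewrite [y]mx2E [F]mx2E mx2_add !mx2_det.
move=> /msmall_mx2 [f1 f2 f3 f4] /msmall_mx2 [y1 y2 y3 y4].
set a := y 0 0; set b' := y 0 1; set c := y 1 0; set d := y 1 1.
set e1 := F 0 0; set e2 := F 0 1; set e3 := F 1 0; set e4 := F 1 1.
have -> : (a + e1) * (d + e4) - (b' + e2) * (c + e3) - (a * d - b' * c)
  = (a * e4 + e1 * d + e1 * e4) - (b' * e3 + e2 * c + e2 * e3) by ring.
have hnn : small (n + b) (e1 * e4) by apply: small_le (small_mul f1 f4); lia.
have hnn' : small (n + b) (e2 * e3) by apply: small_le (small_mul f2 f3); lia.
have hb1 : forall x y, small b x -> small n y -> small (n + b) (x * y).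
  by move=> x z hx hz; rewrite addrC; apply: small_mul.
have hb2 : forall x y, small n x -> small b y -> small (n + b) (x * y).
  by move=> x z hx hz; apply: small_mul.
apply: small_sub; apply: small_add; try apply: small_add; auto.
Qed.

Lemma small_perturb x e m : x != 0 -> small m e -> v x < m -> x + e != 0 /\ v (x + e) = v x.
Proof.
move=> x0 [->|he] hm; first by rewrite addr0.
have [e0|e0] := eqVneq e 0; first by rewrite e0 addr0.
have xe0 : x + e != 0.
  apply/eqP => h; have ex : e = - x by apply: (addrI x); rewrite h subrr.
  move: he; rewrite ex vN; lia.
split => //; apply/eqP; rewrite eq_le; apply/andP; split; last first.
  by apply: vD => //; lia.
rewrite leNgt; apply/negP => hlt.
have : v x + 1 <= v ((x + e) + - e).
  by apply: vD; rewrite ?oppr_eq0 ?addrK ?vN //; lia.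
rewrite addrK; lia.
Qed.

Variables (alpha beta : rat) (s : K).
Hypothesis Hs : s * s = iota alpha.
Hypothesis Ha : alpha != 0.
Hypothesis Hb : beta != 0.

Lemma s_neq0 : s != 0.
Proof. by apply/eqP => s0; move: Hs; rewrite s0 mul0r => /esym/eqP; rewrite fmorph_eq0 (negbTE Ha). Qed.
Lemma ib_neq0 : iota beta != 0. Proof. by rewrite fmorph_eq0. Qed.

Definition qscale (c : rat) (x : quat) : quat :=
  let '(x1, x2, x3, x4) := x in (c * x1, c * x2, c * x3, c * x4).

Lemma qmxE (x1 x2 x3 x4 : rat) : qmx iota alpha beta s (x1, x2, x3, x4) =
  mx2 (iota x1 + iota x2 * s) (iota beta * (iota x3 + iota x4 * s))
      (iota x3 - iota x4 * s) (iota x1 - iota x2 * s).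
Proof. by []. Qed.

Lemma qmx_mul x y : qmx iota alpha beta s (qmul alpha beta x y) =
  qmx iota alpha beta s x *m qmx iota alpha beta s y.
Proof.
case: x => [[[a1 a2] a3] a4]; case: y => [[[b1 b2] b3] b4].
have -> : qmul alpha beta (a1, a2, a3, a4) (b1, b2, b3, b4) =
  (a1 * b1 + alpha * a2 * b2 + beta * a3 * b3 - alpha * beta * a4 * b4,
   a1 * b2 + a2 * b1 - beta * a3 * b4 + beta * a4 * b3,
   a1 * b3 + a3 * b1 + alpha * a2 * b4 - alpha * a4 * b2,
   a1 * b4 + a4 * b1 + a2 * b3 - a3 * b2) by [].
rewrite !qmxE mx2_mul; congr mx2; rewrite !(rmorphD, rmorphB, rmorphN, rmorphM) -Hs; ring.
Qed.
Lemma qmx_det x : \det (qmx iota alpha beta s x) = iota (qnorm alpha beta x).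
Proof.
case: x => [[[a1 a2] a3] a4]; rewrite qmxE mx2_det /qnorm.
rewrite !(rmorphD, rmorphB, rmorphN, rmorphM, rmorphXn) -Hs; ring.
Qed.
Lemma qmx_scale c x : qmx iota alpha beta s (qscale c x) = iota c *: qmx iota alpha beta s x.
Proof.
case: x => [[[a1 a2] a3] a4].
have -> : qscale c (a1, a2, a3, a4) = (c * a1, c * a2, c * a3, c * a4) by [].
rewrite !qmxE mx2_scale; congr mx2;
  rewrite !(rmorphD, rmorphB, rmorphM); ring.
Qed.
Lemma qnorm_sq c y : qnorm alpha beta (qscale c (qmul alpha beta y y)) = (c * qnorm alpha beta y) ^+ 2.
Proof. case: y => [[[a1 a2] a3] a4]; rewrite /qscale /qmul /qnorm; ring. Qed.

Lemma zmod5 (V : zmodType) (G A B C H : V) : G + A + (B + C) - (G + H) = A + B + C - H.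
Proof.
rewrite opprD (addrC G A) -!addrA; congr (A + _); rewrite !addrA; congr (_ + _).
by rewrite -(addrA G B C) addrC addKr.
Qed.

Lemma close_small n x y : close v n x y -> small n (y - x).
Proof.
case=> [->|h]; first by rewrite subrr; left.
by right; rewrite -opprB vN.
Qed.

Lemma CH (a b c d : K) : a * d - b * c = 1 ->
  mx2 (1 + a) b c (1 + d) *m mx2 (1 + a) b c (1 + d) = (2 + a + d) *: mx2 a b c d.
Proof.
move=> h; have e : b * c = a * d - 1 by rewrite -h; ring.
rewrite mx2_mul mx2_scale; congr mx2; try ring.
  by rewrite e; ring.
by rewrite [c * b]mulrC e; ring.
Qed.

Lemma AP g n0 : \det g = 1 -> 2 + g 0 0 + g 1 1 != 0 ->
  exists x : quat, qnorm alpha beta x = 1 /\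
    exists E0 : 'M[K]_2, msmall n0 E0 /\ qmx iota alpha beta s x = g *m (1 + E0).
Proof.
move=> dg1 ht.
have dens : forall (x : K) (n : int), exists q : rat, close v n x (iota q).
  by have := Hq; rewrite /is_Qp => -[].
set a := g 0 0 in ht *; set b := g 0 1; set c := g 1 0; set d := g 1 1 in ht *.
have eg : g = mx2 a b c d := mx2E g.
have hdet : a * d - b * c = 1 by rewrite -mx2_det -eg.
set t := 2 + a + d in ht.
set y := mx2 (1 + a) b c (1 + d).
have yy : y *m y = t *: g by rewrite eg CH.
have ebc : b * c = a * d - 1 by rewrite -hdet; ring.
have dety : \det y = t by rewrite mx2_det /t ebc; ring.
set ginv := mx2 d (- b) (- c) a.
have hginv : g *m ginv = 1.
  rewrite eg mx2_mul mx2_one; congr mx2; try ring.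
    by rewrite -hdet; ring.
  by rewrite -hdet; ring.
have s0 := s_neq0; have ib0 := ib_neq0; have t2 := two_neq0.
set z1 := (1 + a + (1 + d)) / 2; set z2 := ((1 + a) - (1 + d)) / (2 * s).
set z3 := (b / iota beta + c) / 2; set z4 := (b / iota beta - c) / (2 * s).
have hy : y = mx2 (z1 + z2 * s) (iota beta * (z3 + z4 * s)) (z3 - z4 * s) (z1 - z2 * s).
  by rewrite /y /z1 /z2 /z3 /z4; congr mx2; field; rewrite ?s0 ?t2 ?ib0.
have [c1 [c1le hc1]] := small_any s 0.
have [c2 [c2le hc2]] := small_any (iota beta) c1.
have hc1' : small c2 s by apply: small_le hc1.
have [by' [byle hby]] := msmall_any y 0.
have [bg [bgle hbg]] := msmall_any g 0.
have [bgi [bgile hbgi]] := msmall_any ginv 0.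
have [M [M0 [hM1 hM2]]] : exists M : int, 0 <= M /\ v t < M + by' /\ n0 <= M + by' + bg + bgi - v t.
  by exists (`|n0| + `|v t| - by' - bg - bgi + 1)%R; lia.
set N := M - c2 - c2.
have [q1 h1] := dens z1 N; have [q2 h2] := dens z2 N.
have [q3 h3] := dens z3 N; have [q4 h4] := dens z4 N.
move/close_small: h1; move/close_small: h2; move/close_small: h3; move/close_small: h4.
set e1 := iota q1 - z1; set e2 := iota q2 - z2; set e3 := iota q3 - z3; set e4 := iota q4 - z4.
move=> he4 he3 he2 he1.
set Yq : quat := (q1, q2, q3, q4).
set Y := qmx iota alpha beta s Yq.
set F := mx2 (e1 + e2 * s) (iota beta * (e3 + e4 * s)) (e3 - e4 * s) (e1 - e2 * s).
have hY : Y = y + F by rewrite /Y /Yq qmxE hy mx2_add /F /e1 /e2 /e3 /e4; congr mx2; ring.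
have hF : msmall M F.
  have sN : forall e, small N e -> small M e by move=> e; apply: small_le; rewrite /N; lia.
  have sNs : forall e, small N e -> small M (e * s).
    by move=> e he; apply: small_le (small_mul he hc1'); rewrite /N; lia.
  apply/msmall_mx2; split; [apply: small_add; auto| |apply: small_sub; auto|apply: small_sub; auto].
  have he3' : small (N + c2) e3 by apply: (small_le _ he3); lia.
  apply: (small_le _ (small_mul hc2 (small_add he3' (small_mul he4 hc1')))); rewrite /N; lia.
set delta := \det Y - \det y.
have hdelta : small (M + by') delta by rewrite /delta hY; apply: det_diff.
have detY : \det Y = t + delta by rewrite /delta dety addrC subrK.
have [dY0 vdY] : \det Y != 0 /\ v (\det Y) = v t by rewrite detY; apply: small_perturb hdelta hM1.
clearbody delta t.
set nq := qnorm alpha beta Yq.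
have inq : iota nq = \det Y by rewrite /nq /Y qmx_det.
have nq0 : nq != 0 by apply/eqP => h; move: dY0; rewrite -inq h rmorph0 eqxx.
exists (qscale nq^-1 (qmul alpha beta Yq Yq)); split.
  by rewrite qnorm_sq mulVf // expr1n.
have hX : qmx iota alpha beta s (qscale nq^-1 (qmul alpha beta Yq Yq)) = (\det Y)^-1 *: (Y *m Y).
  by rewrite qmx_scale qmx_mul fmorphV inq.
set X := qmx iota alpha beta s _ in hX *.
exists (ginv *m (X - g)); split; last first.
  by rewrite mulmxDr mulmx1 mulmxA hginv mul1mx addrC subrK.
have hXg : X - g = (\det Y)^-1 *: (y *m F + F *m y + F *m F - delta *: g).
  have -> : y *m F + F *m y + F *m F - delta *: g = Y *m Y - \det Y *: g.
    rewrite detY hY !mulmxDl !mulmxDr yy scalerDl.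
    by rewrite zmod5.
  by rewrite hX scalerBr scalerA mulVf // scale1r.
rewrite hXg.
have hD : msmall (M + by' + bg) (y *m F + F *m y + F *m F - delta *: g).
  apply: msmall_add; last first.
    by apply: msmall_opp; apply: msmall_scale.
  apply: msmall_add; first apply: msmall_add.
  - by apply: msmall_le (msmall_mul hby hF); lia.
  - by apply: msmall_le (msmall_mul hF hby); lia.
  - by apply: msmall_le (msmall_mul hF hF); lia.
have := msmall_mul hbgi (msmall_scale (small_inv dY0) hD).
rewrite vdY => H; apply: msmall_le H; lia.
Qed.

Lemma approx_h h n0 : \det h = 1 -> exists x : quat, qnorm alpha beta x = 1 /\
  exists E0 : 'M[K]_2, msmall n0 E0 /\
    (qmx iota alpha beta s x = h *m (1 + E0) \/ qmx iota alpha beta s x = (- h) *m (1 + E0)).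
Proof.
move=> dh.
case: (eqVneq (2 + h 0 0 + h 1 1) 0) => [e|ne]; last first.
  have [x [nx [E0 [hE hx]]]] := AP n0 dh ne.
  by exists x; split => //; exists E0; split => //; left.
have dh' : \det (- h) = 1 by rewrite -scaleN1r detZ expr2 mulrNN !mul1r dh.
have ne : 2 + (- h) 0 0 + (- h) 1 1 != 0.
  rewrite !mxE.
  have -> : 2 - h 0 0 - h 1 1 = 4 - (2 + h 0 0 + h 1 1) by ring.
  rewrite e subr0 -(rmorph_nat iota) fmorph_eq0 //.
have [x [nx [E0 [hE hx]]]] := AP n0 dh' ne.
by exists x; split => //; exists E0; split => //; right.
Qed.

Lemma stab L : is_lattice v L -> exists n, forall (E0 g : 'M[K]_2), msmall n E0 ->
  \det (1 + E0) = 1 -> homot (lact (g *m (1 + E0)) L) (lact g L).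
Proof.
move=> hL; have [B [Bu hB]] := lat_unit_basis hL.
have [b1 [b1le hb1]] := msmall_any (invmx B) 0.
have [b2 [b2le hb2]] := msmall_any B 0.
exists (- (b1 + b2)) => E0 g hE dE.
set W := invmx B *m (1 + E0) *m B.
have hW : W = 1 + invmx B *m E0 *m B by rewrite /W mulmxDr mulmx1 mulmxDl mulVmx.
have uW : unimod W.
  split.
    move=> i j; rewrite hW; apply: (msmall_add msmall1) => //.
    have := msmall_mul (msmall_mul hb1 hE) hb2.
    by move=> H; apply: (msmall_le _ H); lia.
  have -> : \det W = 1.
    have B0 : \det B != 0 by rewrite -unitfE -unitmxE.
    by rewrite /W !det_mulmx det_inv dE mulr1 mulVf.
  by rewrite oner_neq0 v1.
have eB : (1 + E0) *m B = B *m W by rewrite /W !mulmxA mulmxV // mul1mx.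
apply: homot_leqv.
apply: leqv_trans (lact_leqv _ hB) _.
apply: leqv_trans (lact_latm _ _) _.
apply: leqv_sym; apply: leqv_trans (lact_leqv _ hB) _.
apply: leqv_trans (lact_latm _ _) _.
rewrite -mulmxA eB mulmxA.
apply: leqv_sym; exact: latm_unimod.
Qed.

Lemma cact_comp h g C : ceq (cact h (cact g C)) (cact (h *m g) C).
Proof. by left; split; apply: homot_leqv; apply: lact_comp. Qed.

Lemma main_wt : weyl_transitive p iota v alpha beta s.
Proof.
move=> w C1 C1' C2 C2' hC1 hC1' hC2 hC2' hw1 hw2.
have [g1 [d1 [a1 b1]]] := to_std hC1 hw1.
have [g2 [d2 [a2 b2]]] := to_std hC2 hw2.
have g1u := unit_det1 d1.
set h := g2 *m invmx g1.
have dh : \det h = 1 by rewrite /h det_mulmx det_inv d1 d2 invr1 mulr1.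
have hg : h *m g1 = g2 by rewrite /h mulmxKV.
have tr : forall X C D, ceq (cact g1 X) C -> ceq (cact g2 X) D -> ceq (cact h C) D.
  move=> X C D h1 h2.
  apply: ceq_trans (ceq_sym (ceq_cact h h1)) _.
  apply: ceq_trans (cact_comp _ _ _) _; rewrite hg; exact: h2.
have hh1 := tr _ _ _ a1 a2.
have hh2 := tr _ _ _ b1 b2.
have [n1 s1] := stab (proj1 hC1).
have [n2 s2] := stab (proj1 (proj2 hC1)).
have [n3 s3] := stab (proj1 hC1').
have [n4 s4] := stab (proj1 (proj2 hC1')).
set n0 := (`|n1| + `|n2| + `|n3| + `|n4|)%R.
have [x [nx [E0 [hE hx]]]] := approx_h n0 dh.
have dE : \det (1 + E0) = 1.
  have : \det (qmx iota alpha beta s x) = 1 by rewrite qmx_det nx rmorph1.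
  case: hx => ->; rewrite det_mulmx ?dh ?mul1r //.
  by rewrite -scaleN1r detZ expr2 mulrNN !mul1r dh mul1r.
have key : forall n (L : lat K), n <= n0 -> (forall (E0 g : 'M[K]_2), msmall n E0 ->
    \det (1 + E0) = 1 -> homot (lact (g *m (1 + E0)) L) (lact g L)) ->
    homot (lact (qmx iota alpha beta s x) L) (lact h L).
  move=> n L nle sL.
  have hE' : msmall n E0 by apply: msmall_le hE.
  case: hx => ->; first exact: sL.
  apply: homot_trans (sL _ _ hE' dE) _.
  apply: homot_sym; rewrite -scaleN1r; apply: scalar_homot.
  by rewrite oppr_eq0 oner_neq0.
exists x; split => //; split.
  apply: ceq_trans hh1; left; split.
    by apply: (key n1) => //; rewrite /n0; lia.
  by apply: (key n2) => //; rewrite /n0; lia.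
apply: ceq_trans hh2; left; split.
  by apply: (key n3) => //; rewrite /n0; lia.
by apply: (key n4) => //; rewrite /n0; lia.
Qed.

End Main.

Theorem proposition3 (alpha beta : rat) (p : nat)
  (K : fieldType) (iota : {rmorphism rat -> K}) (v : K -> int) (s : K) :
  alpha != 0 -> beta != 0 ->
  is_division_algebra alpha beta ->
  prime p -> p != 2%N ->
  vp p alpha = 0 -> vp p beta = 0 ->
  is_Qp p iota v ->
  s * s = iota alpha ->
  weyl_transitive p iota v alpha beta s.
Proof.
move=> Ha Hb _ Hp _ _ _ Hq Hs.
exact: (main_wt Hq Hp Hs Ha Hb).
Qed.
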